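(* Let $X=X(s)$ be a strictly convex $C^{(3)}$ curve in the plane $\mathbb{R}^2$, parametrized by arclength. Suppose there is a function $\lambda(s)$ such that for all $s$ and all sufficiently small $h_1,h_2$ (with $X(s),X(s+h_1),X(s+h_2)$ distinct) we have $$U(s,h_1,h_2)=\lambda(s)\,T(s,h_1,h_2).$$ Then $\lambda(s)=\frac12$ for all $s$ and $X$ is an open part of a parabola.
   Context: A regular plane curve $X$ defined on an open interval is convex if for every point of $X$ the trace of $X$ lies entirely in one closed half-plane determined by the tangent line at that point. A simple convex curve $X$ is strictly convex if it is of class $C^{(3)}$ and has positive curvature with respect to the unit normal pointing to the convex side. For three distinct points $A=X(s)$, $A_i=X(s+h_i)$ ($i=1,2$) on $X$, let $\ell,\ell_1,\ell_2$ be the tangent lines of $X$ at $A,A_1,A_2$, and let $B=\ell_1\cap\ell_2$, $B_1=\ell\cap\ell_1$, $B_2=\ell\cap\ell_2$. Define $T(s,h_1,h_2)=|\triangle AA_1A_2|$ and $U(s,h_1,h_2)=|\triangle BB_1B_2|$ (areas). *)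

(* Defs.v *)
From Stdlib Require Import Reals Lra.
From Coquelicot Require Import Coquelicot.
Open Scope R_scope.

Definition pt := (R * R)%type.

Definition vsub (p q : pt) : pt := (fst p - fst q, snd p - snd q).
Definition vadd (p q : pt) : pt := (fst p + fst q, snd p + snd q).
Definition vscal (k : R) (p : pt) : pt := (k * fst p, k * snd p).

Definition cross (u v : pt) : R := fst u * snd v - snd u * fst v.

Definition tri_area (P Q R0 : pt) : R := Rabs (cross (vsub Q P) (vsub R0 P)) / 2.

(* intersection point of the lines P + t u and Q + r v (meaningful when
   cross u v <> 0, which is always assumed where it is used) *)
Definition line_inter (P u Q v : pt) : pt :=
  vadd P (vscal (cross (vsub Q P) v / cross u v) u).

Definition curve (x y : R -> R) (s : R) : pt := (x s, y s).
Definition tangent (x y : R -> R) (s : R) : pt := (Derive x s, Derive y s).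

Definition in_I (a b : Rbar) (s : R) : Prop := Rbar_lt a s /\ Rbar_lt s b.

Definition C3_on (a b : Rbar) (f : R -> R) : Prop :=
  forall s, in_I a b s ->
    ex_derive_n f 1 s /\ ex_derive_n f 2 s /\ ex_derive_n f 3 s /\
    continuous (Derive_n f 3) s.

Definition arclength_on (a b : Rbar) (x y : R -> R) : Prop :=
  forall s, in_I a b s -> (Derive x s) ^ 2 + (Derive y s) ^ 2 = 1.

(* signed curvature w.r.t. the normal J X' = (-y', x') *)
Definition curvature (x y : R -> R) (s : R) : R :=
  Derive x s * Derive_n y 2 s - Derive y s * Derive_n x 2 s.

(* The normal sigma * (-y', x') points to the convex side iff
   sigma * cross(X'(s), X(t) - X(s)) >= 0 for all t; the curvature w.r.t.
   that normal is sigma * curvature. *)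
Definition strictly_convex (a b : Rbar) (x y : R -> R) : Prop :=
  C3_on a b x /\ C3_on a b y /\
  (forall s t, in_I a b s -> in_I a b t -> curve x y s = curve x y t -> s = t) /\
  (forall s, in_I a b s ->
     exists sigma : R, (sigma = 1 \/ sigma = -1) /\
       (forall t, in_I a b t ->
          0 <= sigma * cross (tangent x y s) (vsub (curve x y t) (curve x y s))) /\
       0 < sigma * curvature x y s).

Definition T_area (x y : R -> R) (s h1 h2 : R) : R :=
  tri_area (curve x y s) (curve x y (s + h1)) (curve x y (s + h2)).

(* U(s,h1,h2) = |triangle B B1 B2|, B = l1 ∩ l2, B1 = l ∩ l1, B2 = l ∩ l2 *)
Definition U_area (x y : R -> R) (s h1 h2 : R) : R :=
  let A := curve x y s in let A1 := curve x y (s + h1) in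
  let A2 := curve x y (s + h2) in
  let t := tangent x y s in let t1 := tangent x y (s + h1) in
  let t2 := tangent x y (s + h2) in
  tri_area (line_inter A1 t1 A2 t2) (line_inter A t A1 t1) (line_inter A t A2 t2).

(* A parabola: image of y = k x^2 (k <> 0) under a rigid motion,
   i.e. { O + t u + k t^2 v | t in R } with (u, v) orthonormal. *)
Definition is_parabola (P : pt -> Prop) : Prop :=
  exists (O u v : pt) (k : R),
    k <> 0 /\ fst u ^ 2 + snd u ^ 2 = 1 /\ fst v ^ 2 + snd v ^ 2 = 1 /\
    fst u * fst v + snd u * snd v = 0 /\
    forall p, P p <-> exists t : R, p = vadd O (vadd (vscal t u) (vscal (k * t ^ 2) v)).

(* Main.v *)
Require Import Defs.
From Stdlib Require Import Reals Lra Psatz.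
From Coquelicot Require Import Coquelicot.
Open Scope R_scope.


Definition lim0 (f : R -> R) (l : R) :=
  forall eps, 0 < eps -> exists d, 0 < d /\
    forall h, h <> 0 -> Rabs h < d -> Rabs (f h - l) < eps.

Lemma lim0_is_lim f l : lim0 f l <-> is_lim f 0 l.
Proof.
  rewrite <- is_lim_spec. split.
  - intros H eps. destruct (H eps (cond_pos eps)) as [d [Hd H1]].
    exists (mkposreal d Hd). intros y Hy Hy0. apply H1.
    + exact Hy0.
    + unfold ball in Hy; simpl in Hy. unfold AbsRing_ball, abs, minus, plus, opp in Hy; simpl in Hy.
      replace y with (y + - 0) by ring. exact Hy.
  - intros H eps Heps. destruct (H (mkposreal eps Heps)) as [d Hd].
    exists d. split. apply cond_pos. intros h Hh0 Hh. apply Hd; auto.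
    unfold ball; simpl. unfold AbsRing_ball, abs, minus, plus, opp; simpl.
    replace (h + - 0) with h by ring. exact Hh.
Qed.

Lemma lim0_plus f g lf lg : lim0 f lf -> lim0 g lg -> lim0 (fun h => f h + g h) (lf + lg).
Proof. rewrite !lim0_is_lim. intros. now apply is_lim_plus'. Qed.

Lemma lim0_mult f g lf lg : lim0 f lf -> lim0 g lg -> lim0 (fun h => f h * g h) (lf * lg).
Proof. rewrite !lim0_is_lim. intros. apply (is_lim_mult f g 0 lf lg); auto. exact I. Qed.

Lemma lim0_const c : lim0 (fun _ => c) c.
Proof. intros e He. exists 1. split. lra. intros. rewrite Rminus_diag, Rabs_R0. lra. Qed.

Lemma lim0_id : lim0 (fun h => h) 0.
Proof. intros e He. exists e. split. lra. intros. now rewrite Rminus_0_r. Qed.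

Lemma lim0_opp f l : lim0 f l -> lim0 (fun h => - f h) (- l).
Proof. rewrite !lim0_is_lim. intros. now apply (is_lim_opp f 0 l). Qed.

Lemma lim0_minus f g lf lg : lim0 f lf -> lim0 g lg -> lim0 (fun h => f h - g h) (lf - lg).
Proof. intros. apply lim0_plus; auto. now apply lim0_opp. Qed.

Lemma lim0_abs f l : lim0 f l -> lim0 (fun h => Rabs (f h)) (Rabs l).
Proof. rewrite !lim0_is_lim. intros. now apply (is_lim_Rabs f 0 l). Qed.

Lemma lim0_inv f l : lim0 f l -> l <> 0 -> lim0 (fun h => / f h) (/ l).
Proof. rewrite !lim0_is_lim. intros. apply (is_lim_inv f 0 l); auto.
  intro E; injection E; auto. Qed.

Lemma lim0_sqrt f l : lim0 f l -> lim0 (fun h => sqrt (f h)) (sqrt l).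
Proof. rewrite !lim0_is_lim. intros. apply (is_lim_comp_continuous f sqrt 0 l); auto.
  apply continuous_sqrt. Qed.

Lemma lim0_ext f g l : (exists d, 0 < d /\ forall h, h <> 0 -> Rabs h < d -> f h = g h) ->
  lim0 f l -> lim0 g l.
Proof. intros [d [Hd E]] H e He. destruct (H e He) as [d' [Hd' H']].
  exists (Rmin d d'). split. now apply Rmin_pos. intros h H0 Hh.
  rewrite <- E; auto. apply H'; auto. eapply Rlt_le_trans; [exact Hh|apply Rmin_r].
  eapply Rlt_le_trans; [exact Hh|apply Rmin_l]. Qed.

Lemma lim0_uniq f g l1 l2 : (exists d, 0 < d /\ forall h, h <> 0 -> Rabs h < d -> f h = g h) ->
  lim0 f l1 -> lim0 g l2 -> l1 = l2.
Proof. intros E H1 H2. apply (lim0_ext f g) in H1; auto.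
  rewrite lim0_is_lim in H1, H2. apply is_lim_unique in H1; apply is_lim_unique in H2.
  rewrite H1 in H2. now injection H2. Qed.

Lemma is_derive_contpt g x l : is_derive g x l -> continuity_pt g x.
Proof. intro H. apply continuity_pt_filterlim. apply (@ex_derive_continuous R_AbsRing R_NormedModule). now exists l. Qed.

Lemma mvt_bound (g g' : R -> R) eta M n : 0 < eta -> 0 <= M ->
  (forall h, Rabs h < eta -> is_derive g h (g' h)) -> g 0 = 0 ->
  (forall h, Rabs h < eta -> Rabs (g' h) <= M * Rabs h ^ n) ->
  forall h, Rabs h < eta -> Rabs (g h) <= M * Rabs h ^ (S n).
Proof.
  intros He HM Hd H0 Hb h Hh.
  destruct (MVT_gen g 0 h g') as [c [Hc E]].
  - intros c Hc. apply Hd. unfold Rmin, Rmax in Hc.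
    destruct (Rle_dec 0 h); unfold Rabs in *; repeat destruct Rcase_abs; lra.
  - intros c Hc. eapply is_derive_contpt. apply Hd. unfold Rmin, Rmax in Hc.
    destruct (Rle_dec 0 h); unfold Rabs in *; repeat destruct Rcase_abs; lra.
  - rewrite H0, Rminus_0_r, Rminus_0_r in E. rewrite E.
    assert (Hch : Rabs c <= Rabs h).
    { unfold Rmin, Rmax in Hc.
      destruct (Rle_dec 0 h); unfold Rabs in *; repeat destruct Rcase_abs; lra. }
    rewrite Rabs_mult. simpl.
    assert (Hgc : Rabs (g' c) <= M * Rabs h ^ n).
    { eapply Rle_trans. apply Hb. lra. apply Rmult_le_compat_l; auto.
      apply pow_incr. split; auto. apply Rabs_pos. }
    rewrite (Rmult_comm (Rabs h)), <- Rmult_assoc.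
    apply Rmult_le_compat_r. apply Rabs_pos. exact Hgc.
Qed.

Lemma in_I_nbhd a b s : in_I a b s -> exists eta, 0 < eta /\
  forall h, Rabs h < eta -> in_I a b (s + h).
Proof.
  intros [Ha Hb].
  assert (Ea : exists ea, 0 < ea /\ forall h, Rabs h < ea -> Rbar_lt a (s + h)).
  { destruct a as [a| |]; simpl in *.
    - exists (s - a). split. lra. intros h Hh. unfold Rabs in Hh; destruct Rcase_abs; lra.
    - contradiction.
    - exists 1. split. lra. intros; exact I. }
  assert (Eb : exists eb, 0 < eb /\ forall h, Rabs h < eb -> Rbar_lt (s + h) b).
  { destruct b as [b| |]; simpl in *.
    - exists (b - s). split. lra. intros h Hh. unfold Rabs in Hh; destruct Rcase_abs; lra.
    - exists 1. split. lra. intros; exact I.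
    - contradiction. }
  destruct Ea as [ea [Hea Ea]]; destruct Eb as [eb [Heb Eb]].
  exists (Rmin ea eb). split. now apply Rmin_pos.
  intros h Hh. split.
  apply Ea. eapply Rlt_le_trans; [exact Hh| apply Rmin_l].
  apply Eb. eapply Rlt_le_trans; [exact Hh| apply Rmin_r].
Qed.

Lemma C3_derivs a b f s : C3_on a b f -> in_I a b s ->
  is_derive f s (Derive f s) /\ is_derive (Derive f) s (Derive_n f 2 s) /\
  is_derive (Derive_n f 2) s (Derive_n f 3 s) /\ continuous (Derive_n f 3) s.
Proof.
  intros H Hs. destruct (H s Hs) as [H1 [H2 [H3 H4]]].
  simpl in H1, H2, H3.
  split; [|split; [|split]].
  - apply Derive_correct. exact H1.
  - apply (Derive_correct (Derive f)). exact H2.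
  - apply (Derive_correct (Derive_n f 2)). exact H3.
  - exact H4.
Qed.

Lemma lim0_shift_cont (g : R -> R) s : continuous g s -> lim0 (fun h => g (s + h)) (g s).
Proof.
  intro Hc. apply lim0_is_lim.
  apply (is_lim_comp_continuous (fun h => s + h) g 0 s).
  - apply lim0_is_lim.
    assert (H : lim0 (fun h => s + h) (s + 0)) by (apply lim0_plus; [apply lim0_const| apply lim0_id]).
    rewrite Rplus_0_r in H. exact H.
  - exact Hc.
Qed.

Lemma young a b f s : C3_on a b f -> in_I a b s ->
  lim0 (fun h => (f (s+h) - f s - h * Derive f s - h^2/2 * Derive_n f 2 s) / h^3)
       (Derive_n f 3 s / 6) /\
  lim0 (fun h => (Derive f (s+h) - Derive f s - h * Derive_n f 2 s) / h^2)
       (Derive_n f 3 s / 2).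
Proof.
  intros HC Hs.
  destruct (in_I_nbhd a b s Hs) as [eta [Heta Hin]].
  assert (Hder : forall h, Rabs h < eta ->
     is_derive f (s+h) (Derive f (s+h)) /\ is_derive (Derive f) (s+h) (Derive_n f 2 (s+h)) /\
     is_derive (Derive_n f 2) (s+h) (Derive_n f 3 (s+h))).
  { intros h Hh. destruct (C3_derivs a b f (s+h) HC (Hin h Hh)) as [A [B [C _]]]. auto. }
  destruct (C3_derivs a b f s HC Hs) as [_ [_ [_ Hc3]]].
  pose proof (lim0_shift_cont _ _ Hc3) as L3.
  set (D1 := Derive f) in *. set (D2 := Derive_n f 2) in *. set (D3 := Derive_n f 3) in *.
  assert (Main : forall eps, 0 < eps -> exists d, 0 < d /\ forall h, Rabs h < d ->
     Rabs (f (s+h) - f s - h * D1 s - h^2/2 * D2 s - h^3/6 * D3 s) <= eps * Rabs h ^ 3 /\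
     Rabs (D1 (s+h) - D1 s - h * D2 s - h^2/2 * D3 s) <= eps * Rabs h ^ 2).
  { intros eps Heps. destruct (L3 eps Heps) as [d [Hd Hd3]].
    exists (Rmin eta d). split. now apply Rmin_pos.
    intros h Hh.
    assert (Hh1 : forall h, Rabs h < Rmin eta d -> Rabs h < eta).
    { intros; eapply Rlt_le_trans; [eassumption| apply Rmin_l]. }
    assert (Hh2 : forall h, Rabs h < Rmin eta d -> Rabs h < d).
    { intros; eapply Rlt_le_trans; [eassumption| apply Rmin_r]. }
    assert (B3 : forall h, Rabs h < Rmin eta d -> Rabs (D3 (s+h) - D3 s) <= eps * Rabs h ^ 0).
    { intros k Hk. simpl. rewrite Rmult_1_r. destruct (Req_dec k 0) as [->|Hk0].
      rewrite Rplus_0_r, Rminus_diag, Rabs_R0. lra.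
      left. apply Hd3; auto. }
    assert (B2 := mvt_bound (fun h => D2 (s+h) - D2 s - h * D3 s) (fun h => D3 (s+h) - D3 s)
       (Rmin eta d) eps 0 (Rmin_pos _ _ Heta Hd) (Rlt_le _ _ Heps)).
    assert (B2' : forall h, Rabs h < Rmin eta d -> Rabs (D2 (s+h) - D2 s - h * D3 s) <= eps * Rabs h ^ 1).
    { apply B2; auto.
      - intros k Hk. destruct (Hder k (Hh1 k Hk)) as [_ [_ HD]].
        auto_derive. repeat split. exists (D3 (s+k)). exact HD.
        replace (Derive (fun x : R => D2 x) (s + k)) with (D3 (s+k)) by (symmetry; apply is_derive_unique; exact HD). ring.
      - rewrite Rplus_0_r. ring. }
    assert (B1 := mvt_bound (fun h => D1 (s+h) - D1 s - h * D2 s - h^2/2 * D3 s)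
       (fun h => D2 (s+h) - D2 s - h * D3 s)
       (Rmin eta d) eps 1 (Rmin_pos _ _ Heta Hd) (Rlt_le _ _ Heps)).
    assert (B1' : forall h, Rabs h < Rmin eta d ->
       Rabs (D1 (s+h) - D1 s - h * D2 s - h^2/2 * D3 s) <= eps * Rabs h ^ 2).
    { apply B1; auto.
      - intros k Hk. destruct (Hder k (Hh1 k Hk)) as [_ [HD _]].
        auto_derive. repeat split. exists (D2 (s+k)). exact HD.
        replace (Derive (fun x : R => D1 x) (s + k)) with (D2 (s+k)) by (symmetry; apply is_derive_unique; exact HD). field.
      - rewrite Rplus_0_r. field. }
    assert (B0 := mvt_bound (fun h => f (s+h) - f s - h * D1 s - h^2/2 * D2 s - h^3/6 * D3 s)
       (fun h => D1 (s+h) - D1 s - h * D2 s - h^2/2 * D3 s)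
       (Rmin eta d) eps 2 (Rmin_pos _ _ Heta Hd) (Rlt_le _ _ Heps)).
    split.
    - apply B0; auto.
      + intros k Hk. destruct (Hder k (Hh1 k Hk)) as [HD _].
        auto_derive. repeat split. exists (D1 (s+k)). exact HD.
        replace (Derive (fun x : R => f x) (s + k)) with (D1 (s+k)) by (symmetry; apply is_derive_unique; exact HD). field.
      + rewrite Rplus_0_r. field.
    - apply B1'; auto. }
  split.
  - intros eps Heps. destruct (Main (eps/2) ltac:(lra)) as [d [Hd M]].
    exists d. split; auto. intros h H0 Hh. destruct (M h Hh) as [M1 _].
    assert (Hp : 0 < Rabs h ^ 3) by (apply pow_lt; now apply Rabs_pos_lt).
    replace ((f (s + h) - f s - h * D1 s - h ^ 2 / 2 * D2 s) / h ^ 3 - D3 s / 6)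
      with ((f (s + h) - f s - h * D1 s - h ^ 2 / 2 * D2 s - h^3/6 * D3 s) / h ^ 3) by (field; auto).
    rewrite Rabs_div by (apply pow_nonzero; auto). rewrite <- RPow_abs.
    apply (Rmult_lt_reg_r (Rabs h ^ 3)); auto. unfold Rdiv. rewrite Rmult_assoc, Rinv_l by lra. nra.
  - intros eps Heps. destruct (Main (eps/2) ltac:(lra)) as [d [Hd M]].
    exists d. split; auto. intros h H0 Hh. destruct (M h Hh) as [_ M1].
    assert (Hp : 0 < Rabs h ^ 2) by (apply pow_lt; now apply Rabs_pos_lt).
    replace ((D1 (s + h) - D1 s - h * D2 s) / h ^ 2 - D3 s / 2)
      with ((D1 (s + h) - D1 s - h * D2 s - h^2/2 * D3 s) / h ^ 2) by (field; auto).
    rewrite Rabs_div by (apply pow_nonzero; auto). rewrite <- RPow_abs.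
    apply (Rmult_lt_reg_r (Rabs h ^ 2)); auto. unfold Rdiv. rewrite Rmult_assoc, Rinv_l by lra. nra.
Qed.


Lemma lim0_val f l l' : lim0 f l -> l = l' -> lim0 f l'.
Proof. intros H ->; exact H. Qed.

Lemma lim0_pow f l n : lim0 f l -> lim0 (fun h => f h ^ n) (l ^ n).
Proof. intro H. induction n. simpl. apply lim0_const. simpl. now apply lim0_mult. Qed.

Ltac lim_tac :=
  lazymatch goal with
  | |- lim0 (fun h => @?A h + @?B h) _ => eapply (lim0_plus A B); [lim_tac | lim_tac]
  | |- lim0 (fun h => @?A h - @?B h) _ => eapply (lim0_minus A B); [lim_tac | lim_tac]
  | |- lim0 (fun h => @?A h * @?B h) _ => eapply (lim0_mult A B); [lim_tac | lim_tac]
  | |- lim0 (fun h => @?A h / ?c) _ => eapply (lim0_mult A (fun _ => / c)); [lim_tac | apply lim0_const]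
  | |- lim0 (fun h => - @?A h) _ => eapply (lim0_opp A); lim_tac
  | |- lim0 (fun h => Rabs (@?A h)) _ => eapply (lim0_abs A); lim_tac
  | |- lim0 (fun h => sqrt (@?A h)) _ => eapply (lim0_sqrt A); lim_tac
  | |- lim0 (fun h => @?A h ^ ?n) _ => eapply (lim0_pow A _ n); lim_tac
  | |- lim0 _ _ => first [apply lim0_id | apply lim0_const | eassumption]
  end.

Definition R3 (f : R -> R) s h := (f (s+h) - f s - h * Derive f s - h^2/2 * Derive_n f 2 s) / h^3.
Definition S2 (f : R -> R) s h := (Derive f (s+h) - Derive f s - h * Derive_n f 2 s) / h^2.

Lemma expand0 f s h : h <> 0 ->
  f (s+h) = f s + h * Derive f s + h^2/2 * Derive_n f 2 s + h^3 * R3 f s h.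
Proof. intro. unfold R3. field. auto. Qed.
Lemma expand1 f s h : h <> 0 ->
  Derive f (s+h) = Derive f s + h * Derive_n f 2 s + h^2 * S2 f s h.
Proof. intro. unfold S2. field. auto. Qed.

Lemma young' a b f s : C3_on a b f -> in_I a b s ->
  lim0 (R3 f s) (Derive_n f 3 s / 6) /\ lim0 (S2 f s) (Derive_n f 3 s / 2).
Proof. intros. apply (young a b f s); auto. Qed.


Lemma U_formula (P0 d0 P1 d1 P2 d2 : pt) :
  cross d0 d1 <> 0 -> cross d0 d2 <> 0 -> cross d1 d2 <> 0 ->
  tri_area (line_inter P1 d1 P2 d2) (line_inter P0 d0 P1 d1) (line_inter P0 d0 P2 d2) =
  (cross d0 P0 * cross d1 d2 - cross d1 P1 * cross d0 d2 + cross d2 P2 * cross d0 d1) ^ 2 /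
   (2 * Rabs (cross d0 d1 * cross d0 d2 * cross d1 d2)).
Proof.
  destruct P0 as [a0 b0], P1 as [a1 b1], P2 as [a2 b2], d0 as [u0 v0], d1 as [u1 v1], d2 as [u2 v2].
  unfold tri_area, line_inter, cross, vsub, vadd, vscal; simpl. intros H1 H2 H3.
  match goal with |- Rabs ?X / 2 = _ => replace X with
   ((a0 * v0 * 0 + (u0 * b0 - v0 * a0) * (u1 * v2 - v1 * u2) - (u1 * b1 - v1 * a1) * (u0 * v2 - v0 * u2) +
      (u2 * b2 - v2 * a2) * (u0 * v1 - v0 * u1)) ^ 2 / ((u0 * v1 - v0 * u1) * (u0 * v2 - v0 * u2) * (u1 * v2 - v1 * u2))) end.
  - assert (HD : (u0 * v1 - v0 * u1) * (u0 * v2 - v0 * u2) * (u1 * v2 - v1 * u2) <> 0) by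
      (repeat apply Rmult_integral_contrapositive_currified; auto).
    rewrite Rabs_div by exact HD. rewrite (Rabs_right (_ ^ 2)) by apply Rle_ge, pow2_ge_0.
    field. now apply Rabs_no_R0.
  - field. auto.
Qed.

Definition ev (P : R -> Prop) := exists d, 0 < d /\ forall h, h <> 0 -> Rabs h < d -> P h.

Lemma ev_and P Q : ev P -> ev Q -> ev (fun h => P h /\ Q h).
Proof. intros [d1 [H1 P1]] [d2 [H2 P2]]. exists (Rmin d1 d2). split. now apply Rmin_pos.
  intros h H0 Hh. split. apply P1; auto. eapply Rlt_le_trans; [exact Hh|apply Rmin_l].
  apply P2; auto. eapply Rlt_le_trans; [exact Hh|apply Rmin_r]. Qed.

Lemma ev_mono (P Q : R -> Prop) : ev P -> (forall h, h <> 0 -> P h -> Q h) -> ev Q.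
Proof. intros [d [Hd H]] HPQ. exists d. split; auto. Qed.

Lemma ev_small e : 0 < e -> ev (fun h => Rabs h < e).
Proof. intros. exists e. split; auto. Qed.

Lemma lim0_ev_neq f l : lim0 f l -> l <> 0 -> ev (fun h => f h <> 0).
Proof. intros H Hl. destruct (H (Rabs l) (Rabs_pos_lt _ Hl)) as [d [Hd P]].
  exists d. split; auto. intros h H0 Hh E. specialize (P h H0 Hh). rewrite E in P.
  rewrite Rminus_0_l, Rabs_Ropp in P. lra. Qed.

Lemma lim0_ev_pos f l : lim0 f l -> 0 < l -> ev (fun h => 0 < f h).
Proof. intros H Hl. destruct (H l Hl) as [d [Hd P]].
  exists d. split; auto. intros h H0 Hh. specialize (P h H0 Hh).
  unfold Rabs in P; destruct Rcase_abs in P; lra. Qed.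

Lemma lim0_uniq_ev f g l1 l2 : ev (fun h => f h = g h) -> lim0 f l1 -> lim0 g l2 -> l1 = l2.
Proof. intros [d [Hd E]] H1 H2. eapply lim0_uniq; [exists d; split; [exact Hd| exact E] | exact H1 | exact H2]. Qed.

Definition HypU (a b : Rbar) (x y : R -> R) (lambda : R -> R) s :=
     exists delta : R, 0 < delta /\
       forall h1 h2 : R,
         Rabs h1 < delta -> Rabs h2 < delta ->
         in_I a b (s + h1) -> in_I a b (s + h2) ->
         curve x y s <> curve x y (s + h1) ->
         curve x y s <> curve x y (s + h2) ->
         curve x y (s + h1) <> curve x y (s + h2) ->
         cross (tangent x y s) (tangent x y (s + h1)) <> 0 ->
         cross (tangent x y s) (tangent x y (s + h2)) <> 0 ->
         cross (tangent x y (s + h1)) (tangent x y (s + h2)) <> 0 ->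
         U_area x y s h1 h2 = lambda s * T_area x y s h1 h2.

Lemma sc_kappa a b x y s : strictly_convex a b x y -> in_I a b s -> curvature x y s <> 0.
Proof. intros [_ [_ [_ H]]] Hs. destruct (H s Hs) as [sg [Hsg [_ Hk]]] .
  intro E. rewrite E, Rmult_0_r in Hk. lra. Qed.

Lemma sc_inj a b x y s h : strictly_convex a b x y -> in_I a b s -> in_I a b (s+h) -> h <> 0 ->
  curve x y s <> curve x y (s+h).
Proof. intros [_ [_ [H _]]] H1 H2 H0 E. apply H in E; auto. lra. Qed.

Lemma sc_inj2 a b x y s h1 h2 : strictly_convex a b x y -> in_I a b (s+h1) -> in_I a b (s+h2) -> h1 <> h2 ->
  curve x y (s+h1) <> curve x y (s+h2).
Proof. intros [_ [_ [H _]]] H1 H2 H0 E. apply H in E; auto. lra. Qed.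

Definition ax (x : R -> R) s h := Derive x s + h * (Derive_n x 2 s / 2 + h * R3 x s h).
Definition bx (x : R -> R) s h := Derive_n x 2 s + h * S2 x s h.

Lemma expandA x s h : h <> 0 -> x (s+h) = x s + h * ax x s h.
Proof. intro. rewrite (expand0 x s h) by auto. unfold ax. field. Qed.
Lemma expandB x s h : h <> 0 -> Derive x (s+h) = Derive x s + h * bx x s h.
Proof. intro. rewrite (expand1 x s h) by auto. unfold bx. field. Qed.

Lemma lim_ax a b x s : C3_on a b x -> in_I a b s -> lim0 (ax x s) (Derive x s).
Proof. intros. destruct (young' a b x s) as [A B]; auto. unfold ax.
  eapply lim0_val. lim_tac. ring. Qed.
Lemma lim_bx a b x s : C3_on a b x -> in_I a b s -> lim0 (bx x s) (Derive_n x 2 s).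
Proof. intros. destruct (young' a b x s) as [A B]; auto. unfold bx.
  eapply lim0_val. lim_tac. ring. Qed.


Lemma sc_C3 a b x y : strictly_convex a b x y -> C3_on a b x /\ C3_on a b y.
Proof. intros [A [B _]]; auto. Qed.

Lemma N_ident tx ty xs ys T1x T1y x1 y1 h bxh byh axh ayh :
 (tx*ys - ty*xs)*(T1x*(ty+h*byh) - T1y*(tx+h*bxh)) - (T1x*y1 - T1y*x1)*(tx*(ty+h*byh) - ty*(tx+h*bxh)) + ((tx+h*bxh)*(ys+h*ayh) - (ty+h*byh)*(xs+h*axh))*(tx*T1y - ty*T1x)
 = h * ( -(T1x*(y1-ys) - T1y*(x1-xs))*(tx*byh - ty*bxh) + ((tx+h*bxh)*ayh - (ty+h*byh)*axh)*(tx*T1y-ty*T1x)).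
Proof. ring. Qed.
Lemma c02_ident tx ty h bxh byh : tx*(ty+h*byh) - ty*(tx+h*bxh) = h*(tx*byh - ty*bxh).
Proof. ring. Qed.
Lemma X_ident x1 xs y1 ys h axh ayh : (x1 - xs)*(ys + h*ayh - ys) - (y1 - ys)*(xs + h*axh - xs) = h*((x1-xs)*ayh - (y1-ys)*axh).
Proof. ring. Qed.

Lemma step1 a b x y lambda s : strictly_convex a b x y -> in_I a b s -> HypU a b x y lambda s ->
  exists d1, 0 < d1 /\ forall h, h <> 0 -> Rabs h < d1 ->
    curvature x y s ^ 2 * (cross (tangent x y (s+h)) (vsub (curve x y (s+h)) (curve x y s))) ^ 2 =
    lambda s * Rabs (cross (tangent x y s) (tangent x y (s+h))) ^ 2 * Rabs (curvature x y s) *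
      Rabs (cross (vsub (curve x y (s+h)) (curve x y s)) (tangent x y s)).
Proof.
  intros Hsc Hs [delta [Hd HU]].
  destruct (sc_C3 _ _ _ _ Hsc) as [Cx Cy].
  pose proof (sc_kappa _ _ _ _ _ Hsc Hs) as Hk.
  destruct (in_I_nbhd a b s Hs) as [eta [Heta Hin]].
  pose proof (lim_ax a b x s Cx Hs) as Lax. pose proof (lim_ax a b y s Cy Hs) as Lay.
  pose proof (lim_bx a b x s Cx Hs) as Lbx. pose proof (lim_bx a b y s Cy Hs) as Lby.
  set (tx := Derive x s) in *. set (ty := Derive y s) in *.
  assert (LV : lim0 (fun h => tx * bx y s h - ty * bx x s h) (curvature x y s)).
  { eapply lim0_val. lim_tac. reflexivity. }
  destruct (lim0_ev_neq _ _ LV Hk) as [dv [Hdv EV]].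
  exists (Rmin delta (Rmin eta dv)). split. repeat apply Rmin_pos; auto.
  intros h1 H10 Hh1.
  assert (Hh1d : Rabs h1 < delta) by (eapply Rlt_le_trans; [exact Hh1| apply Rmin_l]).
  assert (Hh1e : Rabs h1 < eta) by (eapply Rlt_le_trans; [exact Hh1| eapply Rle_trans; [apply Rmin_r| apply Rmin_l]]).
  assert (Hh1v : Rabs h1 < dv) by (eapply Rlt_le_trans; [exact Hh1| eapply Rle_trans; [apply Rmin_r| apply Rmin_r]]).
  set (wx := x (s+h1) - x s). set (wy := y (s+h1) - y s).
  set (T1x := Derive x (s+h1)). set (T1y := Derive y (s+h1)).
  set (c01 := tx * T1y - ty * T1x).
  assert (Hc01 : c01 <> 0).
  { unfold c01, T1x, T1y. rewrite (expandB x s h1), (expandB y s h1) by auto.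
    change (Derive x s) with tx; change (Derive y s) with ty.
    replace (tx * (ty + h1 * bx y s h1) - ty * (tx + h1 * bx x s h1)) with
      (h1 * (tx * bx y s h1 - ty * bx x s h1)) by ring.
    apply Rmult_integral_contrapositive_currified; auto. }
  set (Q := fun h => - (T1x * wy - T1y * wx) * (tx * bx y s h - ty * bx x s h) +
          ((tx + h * bx x s h) * ax y s h - (ty + h * bx y s h) * ax x s h) * c01).
  set (G := fun h => lambda s * Rabs c01 * Rabs (tx * bx y s h - ty * bx x s h) *
          Rabs (T1x * (ty + h * bx y s h) - T1y * (tx + h * bx x s h)) *
          Rabs (wx * ax y s h - wy * ax x s h)).
  assert (LQ : lim0 (fun h => Q h ^ 2) ((- (T1x * wy - T1y * wx) * curvature x y s) ^ 2)).
  { unfold Q. eapply lim0_val. lim_tac. unfold curvature. fold tx ty. ring. }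
  assert (LG : lim0 G (lambda s * Rabs c01 * Rabs (curvature x y s) * Rabs (T1x * ty - T1y * tx) *
                    Rabs (wx * ty - wy * tx))).
  { unfold G. eapply lim0_val. lim_tac. rewrite !Rmult_0_l, !Rplus_0_r. reflexivity. }
  assert (L12 : lim0 (fun h => T1x * (ty + h * bx y s h) - T1y * (tx + h * bx x s h)) (- c01)).
  { eapply lim0_val. lim_tac. unfold c01. ring. }
  assert (Hc01' : - c01 <> 0) by (intro; apply Hc01; lra).
  assert (EV12 := lim0_ev_neq _ _ L12 Hc01').
  assert (EQ : ev (fun h => Q h ^ 2 = G h)).
  { eapply ev_mono. apply ev_and. exact EV12. apply ev_and. apply (ev_small (Rmin delta (Rmin eta dv))).
    repeat apply Rmin_pos; auto. apply (ev_small (Rabs h1)). now apply Rabs_pos_lt.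
    intros h H0 [N12 [Hh Hhh1]].
    assert (Hhd : Rabs h < delta) by (eapply Rlt_le_trans; [exact Hh| apply Rmin_l]).
    assert (Hhe : Rabs h < eta) by (eapply Rlt_le_trans; [exact Hh| eapply Rle_trans; [apply Rmin_r| apply Rmin_l]]).
    assert (Hhv : Rabs h < dv) by (eapply Rlt_le_trans; [exact Hh| eapply Rle_trans; [apply Rmin_r| apply Rmin_r]]).
    assert (Vh := EV h H0 Hhv).
    assert (Hneq : h1 <> h) by (intro E; rewrite E in Hhh1; lra).
    assert (C1 : cross (tangent x y s) (tangent x y (s + h1)) <> 0) by exact Hc01.
    assert (C2 : cross (tangent x y s) (tangent x y (s + h)) <> 0).
    { unfold cross, tangent; simpl. rewrite (expandB x s h), (expandB y s h) by auto.
      change (Derive x s) with tx; change (Derive y s) with ty.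
      replace (tx * (ty + h * bx y s h) - ty * (tx + h * bx x s h)) with
        (h * (tx * bx y s h - ty * bx x s h)) by ring.
      apply Rmult_integral_contrapositive_currified; auto. }
    assert (C3 : cross (tangent x y (s+h1)) (tangent x y (s + h)) <> 0).
    { unfold cross, tangent; simpl. rewrite (expandB x s h), (expandB y s h) by auto.
      exact N12. }
    assert (HUh := HU h1 h Hh1d Hhd (Hin h1 Hh1e) (Hin h Hhe)
       (sc_inj _ _ _ _ _ _ Hsc Hs (Hin h1 Hh1e) H10) (sc_inj _ _ _ _ _ _ Hsc Hs (Hin h Hhe) H0)
       (sc_inj2 _ _ _ _ _ _ _ Hsc (Hin h1 Hh1e) (Hin h Hhe) Hneq) C1 C2 C3).
    unfold U_area, T_area in HUh. cbv zeta in HUh.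
    rewrite U_formula in HUh by auto.
    revert HUh C2 C3. unfold tri_area, cross, curve, tangent, vsub; simpl.
    rewrite (expandA x s h), (expandA y s h), (expandB x s h), (expandB y s h) by auto.
    change (Derive x s) with tx; change (Derive y s) with ty.
    fold T1x T1y. intros HUh C2 C3.
    rewrite N_ident, c02_ident, X_ident in HUh.
    set (V' := tx * bx y s h - ty * bx x s h) in *.
    set (c12 := T1x * (ty + h * bx y s h) - T1y * (tx + h * bx x s h)) in *.
    set (X := (x (s + h1) - x s) * ax y s h - (y (s + h1) - y s) * ax x s h) in *.
    replace (- (T1x * (y (s + h1) - y s) - T1y * (x (s + h1) - x s)) * V' +
        ((tx + h * bx x s h) * ax y s h - (ty + h * bx y s h) * ax x s h) * (tx * T1y - ty * T1x))
      with (Q h) in HUh by reflexivity.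
    change (tx * T1y - ty * T1x) with c01 in HUh.
    rewrite !Rabs_mult in HUh.
    assert (Hah : 0 < Rabs h) by (apply Rabs_pos_lt; auto).
    assert (Ha1 : 0 < Rabs c01) by (apply Rabs_pos_lt; auto).
    assert (Ha2 : 0 < Rabs V') by (apply Rabs_pos_lt; auto).
    assert (Ha3 : 0 < Rabs c12) by (apply Rabs_pos_lt; auto).
    assert (E2 : (h * Q h) * ((h * Q h) * 1) =
       (lambda s * (Rabs h * Rabs X / 2)) * (2 * (Rabs c01 * (Rabs h * Rabs V') * Rabs c12))).
    { rewrite <- HUh. field. repeat split; lra. }
    assert (Habs : Rabs h * Rabs h = h * h) by (rewrite <- Rabs_mult; apply Rabs_right; nra).
    apply (Rmult_eq_reg_l (h * h)); [| nra].
    transitivity ((h * Q h) * ((h * Q h) * 1)). ring. rewrite E2.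
    unfold G. fold V' c12. change (wx * ax y s h - wy * ax x s h) with X. rewrite <- Habs. field. }
  pose proof (lim0_uniq_ev _ _ _ _ EQ LQ LG) as E.
  unfold cross, tangent, curve, vsub; simpl. fold tx ty T1x T1y wx wy.
  change (tx * T1y - ty * T1x) with c01.
  replace (Rabs (T1x * ty - T1y * tx)) with (Rabs c01) in E
    by (unfold c01; rewrite <- Rabs_Ropp; f_equal; ring).
  transitivity ((- (T1x * wy - T1y * wx) * curvature x y s) ^ 2). ring.
  rewrite E. ring.
Qed.


Definition a2 (x : R -> R) s h := Derive_n x 2 s / 2 + h * R3 x s h.
Lemma ax_a2 x s h : ax x s h = Derive x s + h * a2 x s h.
Proof. reflexivity. Qed.
Lemma lim_a2 a b x s : C3_on a b x -> in_I a b s -> lim0 (a2 x s) (Derive_n x 2 s / 2).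
Proof. intros. destruct (young' a b x s) as [A B]; auto. unfold a2.
  eapply lim0_val. lim_tac. field. Qed.

Lemma pow2_Rabs r : Rabs r ^ 2 = r ^ 2.
Proof. simpl. rewrite Rmult_1_r, Rmult_1_r. rewrite <- Rabs_mult. apply Rabs_right. nra. Qed.

Lemma id_T h tx ty bxh byh a2x a2y xs ys :
  (tx + h * bxh) * (ys + h * (ty + h * a2y) - ys) - (ty + h * byh) * (xs + h * (tx + h * a2x) - xs) =
  h ^ 2 * ((tx * a2y - ty * a2x) + (bxh * (ty + h * a2y) - byh * (tx + h * a2x))).
Proof. ring. Qed.
Lemma id_W h tx ty a2x a2y xs ys :
  (xs + h * (tx + h * a2x) - xs) * ty - (ys + h * (ty + h * a2y) - ys) * tx = h ^ 2 * (a2x * ty - a2y * tx).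
Proof. ring. Qed.
Lemma cancel_h4 k P lam V W h : h <> 0 ->
  k ^ 2 * (h ^ 2 * P) ^ 2 = lam * Rabs (h * V) ^ 2 * Rabs k * Rabs (h ^ 2 * W) ->
  k ^ 2 * P ^ 2 = lam * V ^ 2 * Rabs k * Rabs W.
Proof. intros H0 E. rewrite !Rabs_mult, (Rpow_mult_distr (Rabs h)), !pow2_Rabs in E.
  rewrite (Rabs_right (h^2)) in E by (apply Rle_ge, pow2_ge_0).
  assert (0 < h ^ 2) by (apply pow2_gt_0; auto).
  apply (Rmult_eq_reg_l (h ^ 2 * h ^ 2)); [| nra].
  replace (h ^ 2 * h ^ 2 * (k ^ 2 * P ^ 2)) with (k ^ 2 * (h ^ 2 * P) ^ 2) by ring.
  rewrite E. ring. Qed.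

Lemma step2 a b x y lambda s : strictly_convex a b x y -> in_I a b s -> HypU a b x y lambda s ->
  lambda s = 1/2.
Proof.
  intros Hsc Hs HU.
  destruct (step1 a b x y lambda s Hsc Hs HU) as [d1 [Hd1 HR]].
  destruct (sc_C3 _ _ _ _ Hsc) as [Cx Cy].
  pose proof (sc_kappa _ _ _ _ _ Hsc Hs) as Hk.
  pose proof (lim_ax a b x s Cx Hs) as Lax. pose proof (lim_ax a b y s Cy Hs) as Lay.
  pose proof (lim_bx a b x s Cx Hs) as Lbx. pose proof (lim_bx a b y s Cy Hs) as Lby.
  pose proof (lim_a2 a b x s Cx Hs) as L2x. pose proof (lim_a2 a b y s Cy Hs) as L2y.
  set (tx := Derive x s) in *. set (ty := Derive y s) in *.
  set (k := curvature x y s) in *.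
  set (f := fun h => k ^ 2 * ((tx * a2 y s h - ty * a2 x s h) + (bx x s h * ax y s h - bx y s h * ax x s h)) ^ 2).
  set (g := fun h => lambda s * (tx * bx y s h - ty * bx x s h) ^ 2 * Rabs k * Rabs (a2 x s h * ty - a2 y s h * tx)).
  assert (Lf : lim0 f (k ^ 2 * (k / 2 - k) ^ 2)).
  { unfold f. eapply lim0_val. lim_tac. unfold k, curvature. fold tx ty. field. }
  assert (Lg : lim0 g (lambda s * k ^ 2 * Rabs k * Rabs (- k / 2))).
  { unfold g. eapply lim0_val. lim_tac. unfold k, curvature. fold tx ty.
    replace (Derive_n x 2 s / 2 * ty - Derive_n y 2 s / 2 * tx) with (- (tx * Derive_n y 2 s - ty * Derive_n x 2 s) / 2) by field.
    reflexivity. }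
  assert (EQ : ev (fun h => f h = g h)).
  { exists d1. split; auto. intros h H0 Hh. specialize (HR h H0 Hh).
    revert HR. unfold cross, tangent, curve, vsub; cbn [fst snd].
    rewrite (expandA x s h), (expandA y s h), (expandB x s h), (expandB y s h) by auto.
    fold tx ty k. rewrite !ax_a2. fold tx ty. intro HR.
    rewrite id_T, c02_ident, id_W in HR.
    unfold f, g. rewrite !ax_a2. fold tx ty.
    apply (cancel_h4 _ _ _ _ _ h H0 HR). }
  pose proof (lim0_uniq_ev _ _ _ _ EQ Lf Lg) as E.
  assert (Ha : Rabs (- k / 2) = Rabs k / 2) by (unfold Rabs; repeat destruct Rcase_abs; lra).
  assert (Hkk : Rabs k * Rabs k = k * k) by (rewrite <- Rabs_mult; apply Rabs_right; nra).
  assert (Hk4 : k ^ 4 <> 0) by (apply pow_nonzero; auto).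
  assert (E' : k ^ 4 * (1/4) = k ^ 4 * (lambda s / 2)).
  { transitivity (k ^ 2 * (k / 2 - k) ^ 2). field. rewrite E, Ha.
    replace (k ^ 4) with (k ^ 2 * (Rabs k * Rabs k)) by (rewrite Hkk; ring). field. }
  apply Rmult_eq_reg_l in E'; auto. lra.
Qed.


Definition sg (r : R) := if Rle_dec 0 r then 1 else -1.
Lemma sg_sq r : sg r * sg r = 1.
Proof. unfold sg; destruct Rle_dec; ring. Qed.
Lemma sg_abs r : sg r * r = Rabs r.
Proof. unfold sg, Rabs; destruct Rle_dec; destruct Rcase_abs; lra. Qed.

Definition fp (x y : R -> R) s h := Derive x s * (x (s+h) - x s) + Derive y s * (y (s+h) - y s).
Definition fq (x y : R -> R) s h := sg (curvature x y s) * (Derive x s * (y (s+h) - y s) - Derive y s * (x (s+h) - x s)).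
Definition fu (x y : R -> R) s h := Derive x s * Derive x (s+h) + Derive y s * Derive y (s+h).
Definition fv (x y : R -> R) s h := sg (curvature x y s) * (Derive x s * Derive y (s+h) - Derive y s * Derive x (s+h)).

Lemma frame_rel tx ty wx wy Tx Ty e k : tx^2+ty^2=1 -> e*e=1 -> e*k = Rabs k -> 0 < e*(tx*wy - ty*wx) -> k <> 0 ->
 k^2 * (Tx*wy - Ty*wx)^2 = 1/2 * Rabs (tx*Ty - ty*Tx)^2 * Rabs k * Rabs (wx*ty - wy*tx) ->
 2 * Rabs k * ((tx*wx+ty*wy)*(e*(tx*Ty - ty*Tx)) - (e*(tx*wy - ty*wx))*(tx*Tx+ty*Ty))^2 =
   (e*(tx*Ty-ty*Tx))^2 * (e*(tx*wy - ty*wx)).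
Proof.
  intros N E Ek Pq Hk HR.
  replace ((tx*wx+ty*wy)*(e*(tx*Ty - ty*Tx)) - (e*(tx*wy - ty*wx))*(tx*Tx+ty*Ty)) with
    (e * (wx*Ty - wy*Tx) + e * (tx^2+ty^2-1) * (wx*Ty - wy*Tx)) by ring.
  rewrite N, Rminus_diag, Rmult_0_r, Rmult_0_l, Rplus_0_r.
  rewrite pow2_Rabs in HR.
  replace (Rabs (wx*ty - wy*tx)) with (e*(tx*wy - ty*wx)) in HR.
  2:{ rewrite <- (Rabs_right (e*(tx*wy - ty*wx))) by lra. rewrite Rabs_mult.
      replace (Rabs e) with 1. rewrite Rmult_1_l, <- Rabs_Ropp. f_equal. ring.
      unfold Rabs; destruct Rcase_abs; nra. }
  assert (HK : 0 < Rabs k) by (apply Rabs_pos_lt; auto).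
  assert (Hkk : k ^ 2 = Rabs k * Rabs k) by (rewrite <- Ek; replace (k^2) with (e*e*(k*k)) by (rewrite E; ring); ring).
  rewrite Hkk in HR.
  apply (Rmult_eq_reg_l (Rabs k)); [| lra].
  replace (Rabs k * (2 * Rabs k * (e * (wx * Ty - wy * Tx)) ^ 2)) with
    (2 * (e * e) * (Rabs k * Rabs k * (Tx * wy - Ty * wx) ^ 2)) by ring.
  rewrite HR, E. replace ((e * (tx * Ty - ty * Tx)) ^ 2) with ((e * e) * (tx * Ty - ty * Tx) ^ 2) by ring.
  rewrite E. field.
Qed.

Lemma step3 a b x y lambda s : strictly_convex a b x y -> arclength_on a b x y -> in_I a b s ->
  HypU a b x y lambda s ->
  exists d, 0 < d /\ forall h, h <> 0 -> Rabs h < d ->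
    in_I a b (s + h) /\ 0 < fq x y s h /\ 0 < fp x y s h * fv x y s h - fq x y s h * fu x y s h /\
    0 < fv x y s h * h /\
    2 * Rabs (curvature x y s) * (fp x y s h * fv x y s h - fq x y s h * fu x y s h) ^ 2 =
      fv x y s h ^ 2 * fq x y s h.
Proof.
  intros Hsc Harc Hs HU.
  pose proof (step2 a b x y lambda s Hsc Hs HU) as Hl.
  destruct (step1 a b x y lambda s Hsc Hs HU) as [d1 [Hd1 HR]].
  destruct (sc_C3 _ _ _ _ Hsc) as [Cx Cy].
  pose proof (sc_kappa _ _ _ _ _ Hsc Hs) as Hk.
  destruct (in_I_nbhd a b s Hs) as [eta [Heta Hin]].
  pose proof (lim_ax a b x s Cx Hs) as Lax. pose proof (lim_ax a b y s Cy Hs) as Lay.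
  pose proof (lim_bx a b x s Cx Hs) as Lbx. pose proof (lim_bx a b y s Cy Hs) as Lby.
  pose proof (lim_a2 a b x s Cx Hs) as L2x. pose proof (lim_a2 a b y s Cy Hs) as L2y.
  pose proof (Harc s Hs) as Hn.
  set (tx := Derive x s) in *. set (ty := Derive y s) in *.
  set (k := curvature x y s) in *. set (e := sg k).
  assert (HK : 0 < Rabs k) by (apply Rabs_pos_lt; auto).
  assert (Lq : lim0 (fun h => e * (tx * a2 y s h - ty * a2 x s h)) (Rabs k / 2)).
  { eapply lim0_val. lim_tac. rewrite <- sg_abs. fold e. unfold k, curvature. fold tx ty. field. }
  assert (Lv : lim0 (fun h => e * (tx * bx y s h - ty * bx x s h)) (Rabs k)).
  { eapply lim0_val. lim_tac. rewrite <- sg_abs. fold e. unfold k, curvature. fold tx ty. ring. }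
  assert (Lg : lim0 (fun h => e * ((tx * ax x s h + ty * ax y s h) * (tx * bx y s h - ty * bx x s h) -
       (tx * a2 y s h - ty * a2 x s h) * ((tx ^ 2 + ty ^ 2) + h * (tx * bx x s h + ty * bx y s h))))
       (Rabs k / 2)).
  { eapply lim0_val. lim_tac. rewrite <- sg_abs. fold e. unfold k, curvature. fold tx ty.
    replace (tx * tx + ty * ty) with (tx ^ 2 + ty ^ 2) by ring. rewrite Hn. field. }
  assert (HK2 : 0 < Rabs k / 2) by lra.
  pose proof (lim0_ev_pos _ _ Lq HK2) as Eq.
  pose proof (lim0_ev_pos _ _ Lv HK) as Ev.
  pose proof (lim0_ev_pos _ _ Lg HK2) as Eg.
  destruct (ev_and _ _ Eq (ev_and _ _ Ev Eg)) as [d2 [Hd2 E2]].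
  exists (Rmin d1 (Rmin eta d2)). split. repeat apply Rmin_pos; auto.
  intros h H0 Hh.
  assert (Hh1 : Rabs h < d1) by (eapply Rlt_le_trans; [exact Hh| apply Rmin_l]).
  assert (Hhe : Rabs h < eta) by (eapply Rlt_le_trans; [exact Hh| eapply Rle_trans; [apply Rmin_r| apply Rmin_l]]).
  assert (Hh2 : Rabs h < d2) by (eapply Rlt_le_trans; [exact Hh| eapply Rle_trans; [apply Rmin_r| apply Rmin_r]]).
  destruct (E2 h H0 Hh2) as [Pq [Pv Pg]].
  specialize (HR h H0 Hh1).
  assert (Hh2p : 0 < h ^ 2) by (apply pow2_gt_0; auto).
  assert (Eqf : fq x y s h = h ^ 2 * (e * (tx * a2 y s h - ty * a2 x s h))).
  { unfold fq. fold tx ty k e. rewrite (expandA x s h), (expandA y s h) by auto. rewrite !ax_a2. fold tx ty. ring. }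
  assert (Evf : fv x y s h = h * (e * (tx * bx y s h - ty * bx x s h))).
  { unfold fv. fold tx ty k e. rewrite (expandB x s h), (expandB y s h) by auto. fold tx ty. ring. }
  assert (Egf : fp x y s h * fv x y s h - fq x y s h * fu x y s h = h ^ 2 *
     (e * ((tx * ax x s h + ty * ax y s h) * (tx * bx y s h - ty * bx x s h) -
       (tx * a2 y s h - ty * a2 x s h) * ((tx ^ 2 + ty ^ 2) + h * (tx * bx x s h + ty * bx y s h))))).
  { rewrite Eqf, Evf. unfold fp, fu. fold tx ty. rewrite (expandA x s h), (expandA y s h), (expandB x s h), (expandB y s h) by auto.
    fold tx ty. rewrite !ax_a2. ring. }
  split; [apply Hin; auto|]. split; [rewrite Eqf; nra|]. split; [rewrite Egf; nra|].
  split; [rewrite Evf; nra|].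
  assert (Pq' : 0 < fq x y s h) by (rewrite Eqf; nra).
  revert HR Pq'. rewrite Hl. unfold cross, tangent, curve, vsub, fp, fq, fu, fv; cbn [fst snd].
  fold tx ty k e. intros HR Pq'.
  apply (frame_rel tx ty _ _ _ _ e k); auto. apply sg_sq. apply sg_abs.
Qed.


Lemma deriv_pq a b x y s h : C3_on a b x -> C3_on a b y -> in_I a b (s + h) ->
  is_derive (fp x y s) h (fu x y s h) /\ is_derive (fq x y s) h (fv x y s h).
Proof.
  intros Cx Cy Hi.
  destruct (C3_derivs a b x (s+h) Cx Hi) as [Dx _].
  destruct (C3_derivs a b y (s+h) Cy Hi) as [Dy _].
  unfold fp, fq, fu, fv. split.
  - auto_derive. split. eexists; exact Dx. split. eexists; exact Dy. auto.
    replace (Derive (fun x0 => x x0) (s + h)) with (Derive x (s+h)) by reflexivity.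
    replace (Derive (fun x0 => y x0) (s + h)) with (Derive y (s+h)) by reflexivity. ring.
  - auto_derive. split. eexists; exact Dy. split. eexists; exact Dx. auto.
    replace (Derive (fun x0 => x x0) (s + h)) with (Derive x (s+h)) by reflexivity.
    replace (Derive (fun x0 => y x0) (s + h)) with (Derive y (s+h)) by reflexivity. ring.
Qed.

Lemma F_deriv (P Q U V : R -> R) h m sgn : is_derive P h (U h) -> is_derive Q h (V h) ->
  0 < Q h -> 0 < m ->
  P h * V h - Q h * U h = sgn * V h * sqrt (Q h) / m ->
  is_derive (fun h => P h / Q h - sgn * 2 * / m / sqrt (Q h)) h 0.
Proof.
  intros HP HQ Hq Hm E.
  assert (Hr : 0 < sqrt (Q h)) by (apply sqrt_lt_R0; auto).
  auto_derive.
  - repeat split; try (eexists; eassumption); try lra.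
  - replace (Derive (fun x : R => P x) h) with (U h) by (symmetry; apply is_derive_unique; exact HP).
    replace (Derive (fun x : R => Q x) h) with (V h) by (symmetry; apply is_derive_unique; exact HQ).
    assert (Eu : U h = (P h * V h - sgn * V h * sqrt (Q h) / m) / Q h) by (rewrite <- E; field; lra).
    rewrite Eu.
    assert (Eq : Q h = sqrt (Q h) * sqrt (Q h)) by (rewrite sqrt_sqrt; lra).
    set (r := sqrt (Q h)) in *. rewrite Eq. field. lra.
Qed.

Lemma const_interval (F : R -> R) l r : (forall h, l < h < r -> is_derive F h 0) ->
  forall h1 h2, l < h1 < r -> l < h2 < r -> F h1 = F h2.
Proof.
  intros HD h1 h2 H1 H2.
  destruct (MVT_gen F h1 h2 (fun _ => 0)) as [c [Hc E]].
  - intros c Hc. apply HD. unfold Rmin, Rmax in Hc. destruct Rle_dec; lra.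
  - intros c Hc. apply (is_derive_contpt F c 0). apply HD. unfold Rmin, Rmax in Hc. destruct Rle_dec; lra.
  - lra.
Qed.

Lemma lim_side_pos G C k d : lim0 G C -> 0 < d -> (forall h, 0 < h < d -> G h = k) -> k = C.
Proof.
  intros L Hd E. apply Rminus_diag_uniq. apply Rabs_eq_0. apply Rle_antisym; [|apply Rabs_pos].
  apply Rnot_lt_le. intro Hlt. destruct (L _ Hlt) as [d' [Hd' P]].
  set (h := Rmin d d' / 2).
  assert (Hh : 0 < h) by (unfold h; apply Rdiv_lt_0_compat; [apply Rmin_pos|]; lra).
  assert (Hh1 : h < d) by (unfold h; pose proof (Rmin_l d d'); lra).
  assert (Hh2 : h < d') by (unfold h; pose proof (Rmin_r d d'); lra).
  specialize (P h ltac:(lra) ltac:(rewrite Rabs_right; lra)). rewrite E in P by lra. lra.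
Qed.

Lemma lim_side_neg G C k d : lim0 G C -> 0 < d -> (forall h, - d < h < 0 -> G h = k) -> k = C.
Proof.
  intros L Hd E. apply Rminus_diag_uniq. apply Rabs_eq_0. apply Rle_antisym; [|apply Rabs_pos].
  apply Rnot_lt_le. intro Hlt. destruct (L _ Hlt) as [d' [Hd' P]].
  set (h := - (Rmin d d' / 2)).
  assert (Hh : 0 < Rmin d d' / 2) by (apply Rdiv_lt_0_compat; [apply Rmin_pos|]; lra).
  assert (Hh1 : Rmin d d' / 2 < d) by (pose proof (Rmin_l d d'); lra).
  assert (Hh2 : Rmin d d' / 2 < d') by (pose proof (Rmin_r d d'); lra).
  specialize (P h ltac:(unfold h; lra) ltac:(unfold h; rewrite Rabs_Ropp, Rabs_right; lra)).
  rewrite E in P by (unfold h; lra). lra.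
Qed.

Lemma arc_orth a b x y s : C3_on a b x -> C3_on a b y -> arclength_on a b x y -> in_I a b s ->
  Derive x s * Derive_n x 2 s + Derive y s * Derive_n y 2 s = 0.
Proof.
  intros Cx Cy Harc Hs.
  destruct (C3_derivs a b x s Cx Hs) as [_ [D2x _]].
  destruct (C3_derivs a b y s Cy Hs) as [_ [D2y _]].
  destruct (in_I_nbhd a b s Hs) as [eta [Heta Hin]].
  assert (H1 : is_derive (fun t => Derive x t ^ 2 + Derive y t ^ 2) s
      (2 * (Derive x s * Derive_n x 2 s + Derive y s * Derive_n y 2 s))).
  { auto_derive. split. eexists; exact D2x. split. eexists; exact D2y. auto.
    replace (Derive (fun x0 => Derive x x0) s) with (Derive_n x 2 s) by (symmetry; apply is_derive_unique; exact D2x).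
    replace (Derive (fun x0 => Derive y x0) s) with (Derive_n y 2 s) by (symmetry; apply is_derive_unique; exact D2y).
    ring. }
  assert (H2 : is_derive (fun t => Derive x t ^ 2 + Derive y t ^ 2) s 0).
  { assert (H0 : is_derive (fun _ : R => 1) s 0) by (auto_derive; auto).
    apply (is_derive_ext_loc (fun _ : R => 1)); [| exact H0]. exists (mkposreal eta Heta). intros t Ht.
    symmetry. replace t with (s + (t - s)) by ring. apply Harc. apply Hin.
    unfold ball in Ht; simpl in Ht; unfold AbsRing_ball, abs, minus, plus, opp in Ht; simpl in Ht. exact Ht. }
  pose proof (is_derive_unique _ _ _ H1) as E1. pose proof (is_derive_unique _ _ _ H2) as E2.
  rewrite E1 in E2. lra.
Qed.


Definition Cs (x y : R -> R) s := - sg (curvature x y s) *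
  (Derive x s * Derive_n y 3 s - Derive y s * Derive_n x 3 s) / (3 * Rabs (curvature x y s) ^ 2).

Definition Phi (x y : R -> R) s (Z : pt) :=
  Rabs (curvature x y s) *
   ((Derive x s * (fst Z - x s) + Derive y s * (snd Z - y s)) -
    Cs x y s * (sg (curvature x y s) * (Derive x s * (snd Z - y s) - Derive y s * (fst Z - x s)))) ^ 2
  - 2 * (sg (curvature x y s) * (Derive x s * (snd Z - y s) - Derive y s * (fst Z - x s))).

Lemma Phi_curve x y s h : Phi x y s (curve x y (s+h)) =
  Rabs (curvature x y s) * (fp x y s h - Cs x y s * fq x y s h) ^ 2 - 2 * fq x y s h.
Proof. reflexivity. Qed.

Lemma sq_inj a c : 0 <= a -> 0 <= c -> a ^ 2 = c ^ 2 -> a = c.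
Proof. intros. nra. Qed.

Lemma sqrt_sq_mul h Q : 0 <= Q -> sqrt (h ^ 2 * Q) = Rabs h * sqrt Q.
Proof. intro. rewrite sqrt_mult. f_equal. rewrite <- sqrt_Rsqr_abs. unfold Rsqr. f_equal. ring.
  apply pow2_ge_0. auto. Qed.

Lemma step4 a b x y lambda s : strictly_convex a b x y -> arclength_on a b x y -> in_I a b s ->
  HypU a b x y lambda s ->
  exists d, 0 < d /\ forall h, Rabs h < d -> in_I a b (s + h) /\ Phi x y s (curve x y (s+h)) = 0.
Proof.
  intros Hsc Harc Hs HU.
  destruct (step3 a b x y lambda s Hsc Harc Hs HU) as [d3 [Hd3 S3]].
  destruct (sc_C3 _ _ _ _ Hsc) as [Cx Cy].
  pose proof (sc_kappa _ _ _ _ _ Hsc Hs) as Hk.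
  pose proof (Harc s Hs) as HN.
  pose proof (arc_orth a b x y s Cx Cy Harc Hs) as HM.
  destruct (young' a b x s Cx Hs) as [LRx _]. destruct (young' a b y s Cy Hs) as [LRy _].
  set (tx := Derive x s) in *. set (ty := Derive y s) in *.
  set (k := curvature x y s) in *. set (e := sg k). set (K := Rabs k).
  assert (HK : 0 < K) by (apply Rabs_pos_lt; auto).
  assert (HeK : e * k = K) by apply sg_abs.
  assert (Hee : e * e = 1) by apply sg_sq.
  set (P3 := fun h => tx * R3 x s h + ty * R3 y s h).
  set (Q3 := fun h => tx * R3 y s h - ty * R3 x s h).
  set (Qd := fun h => K / 2 + h * (e * Q3 h)).
  assert (Ep : forall h, h <> 0 -> fp x y s h = h * (1 + h ^ 2 * P3 h)).
  { intros h H0. unfold fp. fold tx ty. rewrite (expandA x s h), (expandA y s h) by auto.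
    unfold ax, P3. fold tx ty.
    transitivity (h * ((tx ^ 2 + ty ^ 2) + h / 2 * (tx * Derive_n x 2 s + ty * Derive_n y 2 s) +
        h ^ 2 * (tx * R3 x s h + ty * R3 y s h))). field.
    rewrite HN, HM. field. }
  assert (Eq : forall h, h <> 0 -> fq x y s h = h ^ 2 * Qd h).
  { intros h H0. unfold fq. fold tx ty k e. rewrite (expandA x s h), (expandA y s h) by auto.
    unfold ax, Qd, Q3. fold tx ty. rewrite <- HeK. unfold k, curvature. fold tx ty. field. }
  assert (LP3 : lim0 P3 (tx * (Derive_n x 3 s / 6) + ty * (Derive_n y 3 s / 6))).
  { unfold P3. lim_tac. }
  assert (LQ3 : lim0 Q3 (tx * (Derive_n y 3 s / 6) - ty * (Derive_n x 3 s / 6))).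
  { unfold Q3. lim_tac. }
  assert (LQd : lim0 Qd (K / 2)).
  { unfold Qd. eapply lim0_val. lim_tac. field. }
  assert (LP : lim0 (fun h => 1 + h ^ 2 * P3 h) 1).
  { unfold P3. eapply lim0_val. lim_tac. field. }
  assert (HK2 : 0 < K / 2) by lra.
  pose proof (lim0_ev_pos _ _ LQd HK2) as EQd.
  pose proof (lim0_ev_pos _ _ LP Rlt_0_1) as EP.
  destruct (ev_and _ _ EQd EP) as [d5 [Hd5 E5]].
  set (m := sqrt (2 * K)).
  assert (Hm : 0 < m) by (apply sqrt_lt_R0; lra).
  assert (Hm2 : m * m = 2 * K) by (apply sqrt_sqrt; lra).
  assert (Hsq : sqrt (K / 2) = m / 2).
  { rewrite <- (sqrt_pow2 (m / 2)) by lra. f_equal. replace ((m/2)^2) with (m * m / 4) by field. rewrite Hm2. field. }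
  set (G := fun h => (2 * h * P3 h + h ^ 3 * P3 h ^ 2 - 2 / K * e * Q3 h) *
      / (Qd h * (1 + h ^ 2 * P3 h + 2 / m * sqrt (Qd h)))).
  assert (LG : lim0 G (Cs x y s)).
  { unfold G. eapply lim0_val. apply lim0_mult. lim_tac. apply lim0_inv. lim_tac.
    - rewrite Hsq. replace (K / 2 * (1 + 0 ^ 2 * (tx * (Derive_n x 3 s / 6) + ty * (Derive_n y 3 s / 6)) +
        2 * / m * (m / 2))) with K by (field; lra). lra.
    - rewrite Hsq. unfold Cs. fold tx ty k e K. field. split; lra. }
  set (d4 := Rmin d3 d5).
  assert (Hd4 : 0 < d4) by (apply Rmin_pos; auto).
  assert (Sd : forall h, h <> 0 -> Rabs h < d4 ->
      in_I a b (s + h) /\ 0 < fq x y s h /\ 0 < fp x y s h * fv x y s h - fq x y s h * fu x y s h /\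
      0 < fv x y s h * h /\ 2 * K * (fp x y s h * fv x y s h - fq x y s h * fu x y s h) ^ 2 =
      fv x y s h ^ 2 * fq x y s h /\ 0 < Qd h /\ 0 < 1 + h ^ 2 * P3 h).
  { intros h H0 Hh.
    assert (Hh3 : Rabs h < d3) by (eapply Rlt_le_trans; [exact Hh| apply Rmin_l]).
    assert (Hh5 : Rabs h < d5) by (eapply Rlt_le_trans; [exact Hh| apply Rmin_r]).
    destruct (S3 h H0 Hh3) as [A [B [C [D E]]]].
    destruct (E5 h H0 Hh5) as [F1 F2].
    tauto. }
  set (F := fun (sgn h : R) => fp x y s h / fq x y s h - sgn * 2 * / m / sqrt (fq x y s h)).
  assert (Gsg : forall h sgn, h <> 0 -> Rabs h < d4 -> 0 < sgn * h -> sgn * sgn = 1 ->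
     fp x y s h * fv x y s h - fq x y s h * fu x y s h = sgn * fv x y s h * sqrt (fq x y s h) / m).
  { intros h sgn H0 Hh Hsh Hsg. destruct (Sd h H0 Hh) as [_ [Pq [Pg [Pv [EE _]]]]].
    assert (Hs2 : sqrt (fq x y s h) * sqrt (fq x y s h) = fq x y s h) by (apply sqrt_sqrt; lra).
    assert (Hsp : 0 < sqrt (fq x y s h)) by (apply sqrt_lt_R0; lra).
    apply sq_inj. lra.
    { apply Rmult_le_pos; [| left; apply Rinv_0_lt_compat; lra].
      apply Rmult_le_pos; [| lra]. nra. }
    replace ((sgn * fv x y s h * sqrt (fq x y s h) / m) ^ 2) with
      ((sgn * sgn) * fv x y s h ^ 2 * (sqrt (fq x y s h) * sqrt (fq x y s h)) / (m * m)) by (field; lra).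
    rewrite Hs2, Hm2, Hsg, Rmult_1_l, <- EE. field. lra. }
  assert (FG : forall h sgn, h <> 0 -> Rabs h < d4 -> 0 < sgn * h -> sgn * sgn = 1 -> F sgn h = G h).
  { intros h sgn H0 Hh Hsh Hsg. destruct (Sd h H0 Hh) as [_ [Pq [_ [_ [_ [PQd PPP]]]]]].
    unfold F, G. rewrite (Ep h H0), (Eq h H0). rewrite sqrt_sq_mul by lra.
    assert (Habs : Rabs h = sgn * h).
    { assert (sgn = 1 \/ sgn = -1) by nra. unfold Rabs; destruct Rcase_abs; nra. }
    rewrite Habs.
    set (r := sqrt (Qd h)).
    assert (Hr : 0 < r) by (apply sqrt_lt_R0; lra).
    assert (Hr2 : r * r = Qd h) by (apply sqrt_sqrt; lra).
    set (PP := 1 + h ^ 2 * P3 h) in *.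
    assert (KI : 2 * h * P3 h + h ^ 3 * P3 h ^ 2 - 2 / K * e * Q3 h = (PP ^ 2 - 4 * (r * r) / (m * m)) / h).
    { rewrite Hr2, Hm2. unfold PP, Qd. field. split; lra. }
    rewrite KI. rewrite <- Hr2. 
    assert (0 < PP + 2 / m * r). { assert (0 < 2 / m * r) by (apply Rmult_lt_0_compat; [apply Rdiv_lt_0_compat|]; lra). lra. }
    assert (0 < PP * m + 2 * r) by (replace (PP * m + 2 * r) with ((PP + 2 / m * r) * m) by (field; lra); nra).
    field. repeat split; try lra. intro; subst sgn; lra. }
  assert (Dsg : forall sgn h, sgn * sgn = 1 -> h <> 0 -> Rabs h < d4 -> 0 < sgn * h -> is_derive (F sgn) h 0).
  { intros sgn h Hsg H0 Hh Hsh. destruct (Sd h H0 Hh) as [Hi [Pq _]].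
    destruct (deriv_pq a b x y s h Cx Cy Hi) as [D1 D2].
    apply (F_deriv (fp x y s) (fq x y s) (fu x y s) (fv x y s) h m sgn); auto. }
  assert (Kpos : F 1 (d4 / 2) = Cs x y s).
  { apply (lim_side_pos G _ _ d4 LG Hd4). intros h Hh. rewrite <- (FG h 1); try lra.
    apply (const_interval (F 1) 0 d4); try lra.
    intros h' Hh'. apply Dsg; try lra. rewrite Rabs_right; lra.
    rewrite Rabs_right; lra. }
  assert (Kneg : F (-1) (- d4 / 2) = Cs x y s).
  { apply (lim_side_neg G _ _ d4 LG Hd4). intros h Hh. rewrite <- (FG h (-1)); try lra.
    apply (const_interval (F (-1)) (- d4) 0); try lra.
    intros h' Hh'. apply Dsg; try lra. rewrite Rabs_left; lra.
    rewrite Rabs_left; lra. }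
  assert (Fval : forall h, h <> 0 -> Rabs h < d4 -> exists sgn, sgn * sgn = 1 /\ F sgn h = Cs x y s).
  { intros h H0 Hh. destruct (Rlt_or_le 0 h).
    - exists 1. split. ring. rewrite <- Kpos. apply (const_interval (F 1) 0 d4); try lra.
      intros h' Hh'. apply Dsg; try lra. rewrite Rabs_right; lra.
      split; auto. rewrite Rabs_right in Hh; lra.
    - exists (-1). split. ring. rewrite <- Kneg. apply (const_interval (F (-1)) (- d4) 0); try lra.
      intros h' Hh'. apply Dsg; try lra. rewrite Rabs_left; lra.
      assert (h < 0) by lra. rewrite Rabs_left in Hh; lra. }
  exists d4. split; auto. intros h Hh. rewrite Phi_curve. destruct (Req_dec h 0) as [->|H0].
  - rewrite Rplus_0_r. split; auto. unfold fp, fq. rewrite !Rplus_0_r. fold K. ring.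
  - destruct (Sd h H0 Hh) as [Hi [Pq _]]. split; auto. fold K.
    destruct (Fval h H0 Hh) as [sgn [Hsg FE]]. unfold F in FE.
    assert (Hsp : 0 < sqrt (fq x y s h)) by (apply sqrt_lt_R0; lra).
    assert (Hs2 : sqrt (fq x y s h) * sqrt (fq x y s h) = fq x y s h) by (apply sqrt_sqrt; lra).
    assert (E1 : fp x y s h - Cs x y s * fq x y s h = sgn * 2 * sqrt (fq x y s h) / m).
    { rewrite <- FE. set (r := sqrt (fq x y s h)) in *. rewrite <- Hs2. field. lra. }
    rewrite E1. replace ((sgn * 2 * sqrt (fq x y s h) / m) ^ 2) with
      (sgn * sgn * 4 * (sqrt (fq x y s h) * sqrt (fq x y s h)) / (m * m)) by (field; lra).
    rewrite Hsg, Hs2, Hm2. change (Rabs (curvature x y s)) with K. field. lra.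
Qed.


Lemma div_out a b c : a * (b - c) = 0 -> b <> c -> a = 0.
Proof. intros H Hbc. apply Rmult_integral in H. destruct H; auto. lra. Qed.

Lemma poly1 c0 c1 t1 t2 : t1 <> t2 ->
  c0 + c1 * t1 = 0 -> c0 + c1 * t2 = 0 -> c0 = 0 /\ c1 = 0.
Proof. intros H E1 E2. assert (c1 = 0).
  { apply (div_out c1 t2 t1); auto. replace (c1 * (t2 - t1)) with ((c0 + c1 * t2) - (c0 + c1 * t1)) by ring. lra. }
  subst c1. split; lra. Qed.

Lemma poly2 c0 c1 c2 t1 t2 t3 : t1 <> t2 -> t1 <> t3 -> t2 <> t3 ->
  (forall t, t = t1 \/ t = t2 \/ t = t3 -> c0 + c1 * t + c2 * t ^ 2 = 0) -> c0 = 0 /\ c1 = 0 /\ c2 = 0.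
Proof. intros H12 H13 H23 E.
  assert (Q : forall t, t = t2 \/ t = t3 -> (c1 + c2 * t1) + c2 * t = 0).
  { intros t Ht. apply (div_out _ t t1).
    replace (((c1 + c2 * t1) + c2 * t) * (t - t1)) with ((c0 + c1 * t + c2 * t ^ 2) - (c0 + c1 * t1 + c2 * t1 ^ 2)) by ring.
    rewrite (E t), (E t1); try tauto. ring. intro; subst; destruct Ht; subst; auto. }
  destruct (poly1 (c1 + c2 * t1) c2 t2 t3 H23 (Q t2 (or_introl eq_refl)) (Q t3 (or_intror eq_refl))) as [A B].
  subst c2. assert (c1 = 0) by lra. subst c1. specialize (E t1 (or_introl eq_refl)). repeat split; lra. Qed.

Lemma poly3 c0 c1 c2 c3 t1 t2 t3 t4 : t1 <> t2 -> t1 <> t3 -> t1 <> t4 -> t2 <> t3 -> t2 <> t4 -> t3 <> t4 ->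
  (forall t, t = t1 \/ t = t2 \/ t = t3 \/ t = t4 -> c0 + c1 * t + c2 * t ^ 2 + c3 * t ^ 3 = 0) ->
  c0 = 0 /\ c1 = 0 /\ c2 = 0 /\ c3 = 0.
Proof. intros H12 H13 H14 H23 H24 H34 E.
  assert (Q : forall t, t = t2 \/ t = t3 \/ t = t4 ->
     (c1 + c2 * t1 + c3 * t1 ^ 2) + (c2 + c3 * t1) * t + c3 * t ^ 2 = 0).
  { intros t Ht. apply (div_out _ t t1).
    replace (((c1 + c2 * t1 + c3 * t1 ^ 2) + (c2 + c3 * t1) * t + c3 * t ^ 2) * (t - t1)) with
      ((c0 + c1 * t + c2 * t ^ 2 + c3 * t ^ 3) - (c0 + c1 * t1 + c2 * t1 ^ 2 + c3 * t1 ^ 3)) by ring.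
    rewrite (E t), (E t1); try tauto. ring. intro; subst; destruct Ht as [|[|]]; subst; auto. }
  destruct (poly2 _ _ _ t2 t3 t4 H23 H24 H34 Q) as [A [B C]].
  subst c3. assert (c2 = 0) by lra. subst c2. assert (c1 = 0) by lra. subst c1.
  specialize (E t1 (or_introl eq_refl)). repeat split; lra. Qed.

Lemma poly4 c0 c1 c2 c3 c4 t1 t2 t3 t4 t5 :
  t1 <> t2 -> t1 <> t3 -> t1 <> t4 -> t1 <> t5 -> t2 <> t3 -> t2 <> t4 -> t2 <> t5 ->
  t3 <> t4 -> t3 <> t5 -> t4 <> t5 ->
  (forall t, t = t1 \/ t = t2 \/ t = t3 \/ t = t4 \/ t = t5 ->
     c0 + c1 * t + c2 * t ^ 2 + c3 * t ^ 3 + c4 * t ^ 4 = 0) ->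
  c0 = 0 /\ c1 = 0 /\ c2 = 0 /\ c3 = 0 /\ c4 = 0.
Proof. intros H12 H13 H14 H15 H23 H24 H25 H34 H35 H45 E.
  assert (Q : forall t, t = t2 \/ t = t3 \/ t = t4 \/ t = t5 ->
     (c1 + c2 * t1 + c3 * t1 ^ 2 + c4 * t1 ^ 3) + (c2 + c3 * t1 + c4 * t1 ^ 2) * t +
     (c3 + c4 * t1) * t ^ 2 + c4 * t ^ 3 = 0).
  { intros t Ht. apply (div_out _ t t1).
    replace (((c1 + c2 * t1 + c3 * t1 ^ 2 + c4 * t1 ^ 3) + (c2 + c3 * t1 + c4 * t1 ^ 2) * t +
     (c3 + c4 * t1) * t ^ 2 + c4 * t ^ 3) * (t - t1)) with
      ((c0 + c1 * t + c2 * t ^ 2 + c3 * t ^ 3 + c4 * t ^ 4) -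
       (c0 + c1 * t1 + c2 * t1 ^ 2 + c3 * t1 ^ 3 + c4 * t1 ^ 4)) by ring.
    rewrite (E t), (E t1); try tauto. ring. intro; subst; destruct Ht as [|[|[|]]]; subst; auto. }
  destruct (poly3 _ _ _ _ t2 t3 t4 t5 H23 H24 H25 H34 H35 H45 Q) as [A [B [C D]]].
  subst c4. assert (c3 = 0) by lra. subst c3. assert (c2 = 0) by lra. subst c2.
  assert (c1 = 0) by lra. subst c1.
  specialize (E t1 (or_introl eq_refl)). repeat split; lra. Qed.

Lemma ALG_core K al be w0 ga de r0 K' C' t1 t2 t3 t4 t5 : 0 < K -> K' <> 0 ->
  t1 <> t2 -> t1 <> t3 -> t1 <> t4 -> t1 <> t5 -> t2 <> t3 -> t2 <> t4 -> t2 <> t5 ->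
  t3 <> t4 -> t3 <> t5 -> t4 <> t5 ->
  (forall t, t = t1 \/ t = t2 \/ t = t3 \/ t = t4 \/ t = t5 ->
    K * (w0 + al * (t + C' * (K' * t ^ 2 / 2)) + be * (K' * t ^ 2 / 2)) ^ 2
    - 2 * (r0 + ga * (t + C' * (K' * t ^ 2 / 2)) + de * (K' * t ^ 2 / 2)) = 0) ->
  be = - al * C' /\ forall p q, K * (w0 + al * p + be * q) ^ 2 - 2 * (r0 + ga * p + de * q) =
     (K * al ^ 2 / K') * (K' * (p - C' * q) ^ 2 - 2 * q).
Proof.
  intros HK HK' H12 H13 H14 H15 H23 H24 H25 H34 H35 H45 E.
  set (B := (al * C' + be) * K' / 2). set (G := (ga * C' + de) * K' / 2).
  destruct (poly4 (K * w0 ^ 2 - 2 * r0) (2 * K * w0 * al - 2 * ga) (K * (al ^ 2 + 2 * w0 * B) - 2 * G)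
     (2 * K * al * B) (K * B ^ 2) t1 t2 t3 t4 t5 H12 H13 H14 H15 H23 H24 H25 H34 H35 H45) as [c0 [c1 [c2 [c3 c4]]]].
  { intros t Ht. rewrite <- (E t Ht). unfold B, G. field. }
  assert (HB : B = 0).
  { apply Rmult_integral in c4. destruct c4 as [c4|c4]. lra. simpl in c4. rewrite Rmult_1_r in c4.
    apply Rmult_integral in c4. tauto. }
  assert (Hbe : be = - al * C').
  { unfold B in HB. apply Rmult_integral in HB. destruct HB as [HB|HB]. apply Rmult_integral in HB.
    destruct HB; [lra| contradiction]. lra. }
  split; auto.
  rewrite HB in c2. 
  assert (Hga : ga = K * w0 * al) by lra.
  assert (Hr0 : r0 = K * w0 ^ 2 / 2) by lra.
  assert (Hde : de = K * al ^ 2 / K' - ga * C').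
  { unfold G in c2. apply (Rmult_eq_reg_l K'); auto. field_simplify; auto. lra. }
  intros p q. rewrite Hbe, Hde, Hga, Hr0. field. auto.
Qed.

Definition PhiG (A1 A2 tx ty e K C Z1 Z2 : R) :=
  K * ((tx * (Z1 - A1) + ty * (Z2 - A2)) - C * (e * (tx * (Z2 - A2) - ty * (Z1 - A1)))) ^ 2
  - 2 * (e * (tx * (Z2 - A2) - ty * (Z1 - A1))).

Lemma PhiG_recon A1 A2 tx ty e K C A1' A2' tx' ty' e' p q :
  PhiG A1 A2 tx ty e K C (A1' + p * tx' - q * e' * ty') (A2' + p * ty' + q * e' * tx') =
  let m1 := tx + C * e * ty in let m2 := ty - C * e * tx in
  let n1 := - e * ty in let n2 := e * tx in
  K * ((m1 * (A1' - A1) + m2 * (A2' - A2)) + (m1 * tx' + m2 * ty') * p + (- m1 * e' * ty' + m2 * e' * tx') * q) ^ 2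
  - 2 * ((n1 * (A1' - A1) + n2 * (A2' - A2)) + (n1 * tx' + n2 * ty') * p + (- n1 * e' * ty' + n2 * e' * tx') * q).
Proof. unfold PhiG. simpl. ring. Qed.

Lemma recon A1' A2' tx' ty' e' Z1 Z2 : tx' ^ 2 + ty' ^ 2 = 1 -> (e' = 1 \/ e' = -1) ->
  let P := tx' * (Z1 - A1') + ty' * (Z2 - A2') in let Q := e' * (tx' * (Z2 - A2') - ty' * (Z1 - A1')) in
  Z1 = A1' + P * tx' - Q * e' * ty' /\ Z2 = A2' + P * ty' + Q * e' * tx'.
Proof. intros N He P Q. unfold P, Q.
  split; apply Rminus_diag_uniq.
  - transitivity ((Z1 - A1') * (1 - (tx' ^ 2 + ty' ^ 2))). destruct He as [-> | ->]; ring. rewrite N; ring.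
  - transitivity ((Z2 - A2') * (1 - (tx' ^ 2 + ty' ^ 2))). destruct He as [-> | ->]; ring. rewrite N; ring.
Qed.

Definition Pc A1' A2' tx' ty' (z : R * R) := tx' * (fst z - A1') + ty' * (snd z - A2').
Definition Qc A1' A2' tx' ty' e' (z : R * R) := e' * (tx' * (snd z - A2') - ty' * (fst z - A1')).

Lemma PhiG_own A1' A2' tx' ty' e' K' C' (z : R * R) :
  PhiG A1' A2' tx' ty' e' K' C' (fst z) (snd z) =
  K' * (Pc A1' A2' tx' ty' z - C' * Qc A1' A2' tx' ty' e' z) ^ 2 - 2 * Qc A1' A2' tx' ty' e' z.
Proof. reflexivity. Qed.

Lemma recon_z A1' A2' tx' ty' e' (z : R * R) : tx' ^ 2 + ty' ^ 2 = 1 -> (e' = 1 \/ e' = -1) ->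
  z = (A1' + Pc A1' A2' tx' ty' z * tx' - Qc A1' A2' tx' ty' e' z * e' * ty',
       A2' + Pc A1' A2' tx' ty' z * ty' + Qc A1' A2' tx' ty' e' z * e' * tx').
Proof. intros N He. destruct (recon A1' A2' tx' ty' e' (fst z) (snd z) N He) as [E1 E2].
  destruct z as [z1 z2]. simpl in *. unfold Pc, Qc; simpl. f_equal; auto. Qed.

Lemma point_poly A1 A2 tx ty e K C A1' A2' tx' ty' e' K' C' (z : R * R) :
  tx' ^ 2 + ty' ^ 2 = 1 -> (e' = 1 \/ e' = -1) ->
  PhiG A1 A2 tx ty e K C (fst z) (snd z) = 0 -> PhiG A1' A2' tx' ty' e' K' C' (fst z) (snd z) = 0 ->
  let t := Pc A1' A2' tx' ty' z - C' * Qc A1' A2' tx' ty' e' z in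
  let m1 := tx + C * e * ty in let m2 := ty - C * e * tx in
  let n1 := - e * ty in let n2 := e * tx in
  K * ((m1 * (A1' - A1) + m2 * (A2' - A2)) + (m1 * tx' + m2 * ty') * (t + C' * (K' * t ^ 2 / 2)) +
      (- m1 * e' * ty' + m2 * e' * tx') * (K' * t ^ 2 / 2)) ^ 2
  - 2 * ((n1 * (A1' - A1) + n2 * (A2' - A2)) + (n1 * tx' + n2 * ty') * (t + C' * (K' * t ^ 2 / 2)) +
      (- n1 * e' * ty' + n2 * e' * tx') * (K' * t ^ 2 / 2)) = 0.
Proof.
  intros N He HF HF' t m1 m2 n1 n2.
  rewrite PhiG_own in HF'.
  assert (HQ : K' * t ^ 2 / 2 = Qc A1' A2' tx' ty' e' z) by (unfold t; lra).
  rewrite HQ. replace (t + C' * Qc A1' A2' tx' ty' e' z) with (Pc A1' A2' tx' ty' z) by (unfold t; ring).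
  rewrite (recon_z A1' A2' tx' ty' e' z N He) in HF. simpl in HF.
  rewrite PhiG_recon in HF. exact HF.
Qed.

Lemma tau_inj A1' A2' tx' ty' e' K' C' (z w : R * R) :
  tx' ^ 2 + ty' ^ 2 = 1 -> (e' = 1 \/ e' = -1) ->
  PhiG A1' A2' tx' ty' e' K' C' (fst z) (snd z) = 0 -> PhiG A1' A2' tx' ty' e' K' C' (fst w) (snd w) = 0 ->
  Pc A1' A2' tx' ty' z - C' * Qc A1' A2' tx' ty' e' z = Pc A1' A2' tx' ty' w - C' * Qc A1' A2' tx' ty' e' w ->
  z = w.
Proof.
  intros N He Hz Hw E. rewrite PhiG_own in Hz, Hw.
  assert (EQ : Qc A1' A2' tx' ty' e' z = Qc A1' A2' tx' ty' e' w).
  { rewrite E in Hz. lra. }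
  assert (EP : Pc A1' A2' tx' ty' z = Pc A1' A2' tx' ty' w) by (rewrite EQ in E; lra).
  rewrite (recon_z A1' A2' tx' ty' e' z N He), (recon_z A1' A2' tx' ty' e' w N He).
  rewrite EQ, EP. reflexivity.
Qed.

Lemma ALG A1 A2 tx ty e K C A1' A2' tx' ty' e' K' C' (z1 z2 z3 z4 z5 : R * R) :
  tx ^ 2 + ty ^ 2 = 1 -> (e = 1 \/ e = -1) -> 0 < K ->
  tx' ^ 2 + ty' ^ 2 = 1 -> (e' = 1 \/ e' = -1) -> 0 < K' ->
  z1 <> z2 -> z1 <> z3 -> z1 <> z4 -> z1 <> z5 -> z2 <> z3 -> z2 <> z4 -> z2 <> z5 ->
  z3 <> z4 -> z3 <> z5 -> z4 <> z5 ->
  (forall z, z = z1 \/ z = z2 \/ z = z3 \/ z = z4 \/ z = z5 ->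
     PhiG A1 A2 tx ty e K C (fst z) (snd z) = 0 /\ PhiG A1' A2' tx' ty' e' K' C' (fst z) (snd z) = 0) ->
  forall Z1 Z2, PhiG A1 A2 tx ty e K C Z1 Z2 / (K * (1 + C ^ 2)) =
                PhiG A1' A2' tx' ty' e' K' C' Z1 Z2 / (K' * (1 + C' ^ 2)).
Proof.
  intros N He HK N' He' HK' H12 H13 H14 H15 H23 H24 H25 H34 H35 H45 HZ Z1 Z2.
  set (tau := fun z => Pc A1' A2' tx' ty' z - C' * Qc A1' A2' tx' ty' e' z).
  assert (Tinj : forall z w, (z = z1 \/ z = z2 \/ z = z3 \/ z = z4 \/ z = z5) ->
     (w = z1 \/ w = z2 \/ w = z3 \/ w = z4 \/ w = z5) -> z <> w -> tau z <> tau w).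
  { intros z w Hz Hw Hzw E. apply Hzw. apply (tau_inj A1' A2' tx' ty' e' K' C'); auto.
    apply HZ; auto. apply HZ; auto. }
  set (m1 := tx + C * e * ty). set (m2 := ty - C * e * tx). set (n1 := - e * ty). set (n2 := e * tx).
  destruct (ALG_core K (m1 * tx' + m2 * ty') (- m1 * e' * ty' + m2 * e' * tx') (m1 * (A1' - A1) + m2 * (A2' - A2))
     (n1 * tx' + n2 * ty') (- n1 * e' * ty' + n2 * e' * tx') (n1 * (A1' - A1) + n2 * (A2' - A2)) K' C'
     (tau z1) (tau z2) (tau z3) (tau z4) (tau z5)) as [Hbe Hid]; auto; try lra.
  all: try (apply Tinj; tauto).
  { intros t Ht. destruct Ht as [-> | [-> | [-> | [-> | ->]]]];
    match goal with |- context [tau ?z] =>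
      destruct (HZ z ltac:(tauto)) as [A B]; exact (point_poly A1 A2 tx ty e K C A1' A2' tx' ty' e' K' C' z N' He' A B) end. }
  set (al := m1 * tx' + m2 * ty') in *. set (be := - m1 * e' * ty' + m2 * e' * tx') in *.
  assert (Hn : al ^ 2 + be ^ 2 = 1 + C ^ 2).
  { transitivity ((m1 ^ 2 + m2 ^ 2) * (tx' ^ 2 + ty' ^ 2)). unfold al, be. destruct He' as [-> | ->]; ring.
    rewrite N'. transitivity ((1 + C ^ 2) * (tx ^ 2 + ty ^ 2)). unfold m1, m2. destruct He as [-> | ->]; ring.
    rewrite N. ring. }
  rewrite Hbe in Hn.
  assert (Hal : al <> 0).
  { intro Z. rewrite Z in Hn. assert (0 < 1 + C ^ 2) by (pose proof (pow2_ge_0 C); lra). lra. }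
  set (z := (Z1, Z2)).
  destruct (recon A1' A2' tx' ty' e' Z1 Z2 N' He') as [R1 R2].
  set (P := tx' * (Z1 - A1') + ty' * (Z2 - A2')) in *. set (Q := e' * (tx' * (Z2 - A2') - ty' * (Z1 - A1'))) in *.
  assert (EF' : PhiG A1' A2' tx' ty' e' K' C' Z1 Z2 = K' * (P - C' * Q) ^ 2 - 2 * Q) by reflexivity.
  assert (EF : PhiG A1 A2 tx ty e K C Z1 Z2 = K * al ^ 2 / K' * (K' * (P - C' * Q) ^ 2 - 2 * Q)).
  { rewrite <- Hid. rewrite R1, R2 at 1. rewrite PhiG_recon. reflexivity. }
  rewrite EF, EF'.
  replace (1 + C ^ 2) with (al ^ 2 * (1 + C' ^ 2)) by (rewrite <- Hn; ring).
  field. repeat split; try lra; auto. pose proof (pow2_ge_0 C'); lra.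
Qed.


Definition Psi (x y : R -> R) s Z := Phi x y s Z / (Rabs (curvature x y s) * (1 + Cs x y s ^ 2)).

Lemma Phi_G x y s Z : Phi x y s Z = PhiG (x s) (y s) (Derive x s) (Derive y s) (sg (curvature x y s))
  (Rabs (curvature x y s)) (Cs x y s) (fst Z) (snd Z).
Proof. reflexivity. Qed.

Lemma sg_cases r : sg r = 1 \/ sg r = -1.
Proof. unfold sg; destruct Rle_dec; auto. Qed.

Lemma local_const a b x y lambda : strictly_convex a b x y -> arclength_on a b x y ->
  (forall s, in_I a b s -> HypU a b x y lambda s) ->
  forall s, in_I a b s -> exists d, 0 < d /\ forall s', Rabs (s' - s) < d ->
    forall Z, Psi x y s' Z = Psi x y s Z.
Proof.
  intros Hsc Harc HU s Hs.
  destruct (step4 a b x y lambda s Hsc Harc Hs (HU s Hs)) as [d [Hd D]].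
  exists d. split; auto. intros s' Hs' Z.
  assert (Hi' : in_I a b s') by (replace s' with (s + (s' - s)) by ring; apply D; auto).
  destruct (step4 a b x y lambda s' Hsc Harc Hi' (HU s' Hi')) as [d' [Hd' D']].
  set (eta := Rmin d' (d - Rabs (s' - s))).
  assert (Heta : 0 < eta) by (apply Rmin_pos; lra).
  set (sig := fun j : R => s' + j * eta / 6).
  assert (Hsig : forall j, 0 < j < 6 -> Rabs (sig j - s') < d' /\ Rabs (sig j - s) < d).
  { intros j Hj. unfold sig. split.
    - replace (s' + j * eta / 6 - s') with (j * eta / 6) by ring. rewrite Rabs_right.
      pose proof (Rmin_l d' (d - Rabs (s' - s))). fold eta in H. nra. nra.
    - replace (s' + j * eta / 6 - s) with ((s' - s) + j * eta / 6) by ring.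
      eapply Rle_lt_trans. apply Rabs_triang. rewrite (Rabs_right (j * eta / 6)) by nra.
      pose proof (Rmin_r d' (d - Rabs (s' - s))). fold eta in H. nra. }
  assert (Pt : forall j, 0 < j < 6 -> in_I a b (sig j) /\ Phi x y s (curve x y (sig j)) = 0 /\
      Phi x y s' (curve x y (sig j)) = 0).
  { intros j Hj. destruct (Hsig j Hj) as [A B].
    destruct (D (sig j - s) B) as [I1 P1]. destruct (D' (sig j - s') A) as [I2 P2].
    replace (s + (sig j - s)) with (sig j) in * by ring.
    replace (s' + (sig j - s')) with (sig j) in * by ring. auto. }
  assert (Dist : forall i j, 0 < i < 6 -> 0 < j < 6 -> i <> j -> curve x y (sig i) <> curve x y (sig j)).
  { intros i j Hi Hj Hij E. destruct Hsc as [_ [_ [Inj _]]].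
    apply Inj in E; try apply Pt; auto. unfold sig in E. apply Hij.
    apply (Rmult_eq_reg_r (eta / 6)). lra. apply Rgt_not_eq. lra. }
  pose proof (Harc s Hs) as N. pose proof (Harc s' Hi') as N'.
  pose proof (sc_kappa _ _ _ _ _ Hsc Hs) as Hk. pose proof (sc_kappa _ _ _ _ _ Hsc Hi') as Hk'.
  unfold Psi. rewrite !Phi_G. symmetry.
  apply (ALG _ _ _ _ _ _ _ _ _ _ _ _ _ _ (curve x y (sig 1)) (curve x y (sig 2)) (curve x y (sig 3))
     (curve x y (sig 4)) (curve x y (sig 5))); auto using sg_cases, Rabs_pos_lt.
  all: try (apply Dist; lra).
  intros z Hz. rewrite <- !Phi_G.
  destruct Hz as [-> | [-> | [-> | [-> | ->]]]]; split; apply Pt; lra.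
Qed.


Lemma parab_point tx ty e K C r A1 A2 Z1 Z2 : tx ^ 2 + ty ^ 2 = 1 -> (e = 1 \/ e = -1) -> 0 < K ->
  0 < r -> r * r = 1 + C ^ 2 -> PhiG A1 A2 tx ty e K C Z1 Z2 = 0 ->
  let u1 := (tx + C * e * ty) / r in let u2 := (ty - C * e * tx) / r in
  let v1 := - u2 in let v2 := u1 in
  let kk := e * K * r ^ 3 / 2 in let ll := e * C in let t0 := ll / (2 * kk) in let c0 := ll ^ 2 / (4 * kk) in
  let O1 := A1 - t0 * u1 - c0 * v1 in let O2 := A2 - t0 * u2 - c0 * v2 in
  let tau := u1 * (Z1 - A1) + u2 * (Z2 - A2) + t0 in
  Z1 = O1 + tau * u1 + kk * tau ^ 2 * v1 /\ Z2 = O2 + tau * u2 + kk * tau ^ 2 * v2.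
Proof.
  intros N He HK Hr Hr2 HP u1 u2 v1 v2 kk ll t0 c0 O1 O2 tau.
  assert (Hkk : kk <> 0).
  { unfold kk. assert (0 < K * r ^ 3) by (apply Rmult_lt_0_compat; auto; apply pow_lt; auto).
    destruct He as [-> | ->]; lra. }
  set (d1 := Z1 - A1) in *. set (d2 := Z2 - A2) in *.
  set (ta := u1 * d1 + u2 * d2). set (om := v1 * d1 + v2 * d2).
  assert (Hu : u1 ^ 2 + u2 ^ 2 = 1).
  { unfold u1, u2. transitivity ((1 + C ^ 2 * (e * e)) * (tx ^ 2 + ty ^ 2) / (r * r)). field. lra.
    rewrite N. replace (e * e) with 1 by (destruct He as [-> | ->]; ring). rewrite Hr2. field. nra. }
  assert (Rd1 : d1 = ta * u1 + om * v1).
  { apply Rminus_diag_uniq. transitivity (d1 * (1 - (u1 ^ 2 + u2 ^ 2))). unfold ta, om, v1, v2. ring.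
    rewrite Hu. ring. }
  assert (Rd2 : d2 = ta * u2 + om * v2).
  { apply Rminus_diag_uniq. transitivity (d2 * (1 - (u1 ^ 2 + u2 ^ 2))). unfold ta, om, v1, v2. ring.
    rewrite Hu. ring. }
  assert (Hm : tx * d1 + ty * d2 - C * (e * (tx * d2 - ty * d1)) = r * ta).
  { unfold ta, u1, u2. field. lra. }
  assert (Hn : e * (tx * d2 - ty * d1) = (- C * ta + e * om) / r).
  { assert (Hn0 : - C * ta + e * om = e * (tx * d2 - ty * d1) * (1 + C ^ 2) / r).
    { unfold ta, om, v1, v2, u1, u2. destruct He as [-> | ->]; field; lra. }
    rewrite Hn0, <- Hr2. field. lra. }
  unfold PhiG in HP. fold d1 d2 in HP. rewrite Hm, Hn in HP.
  assert (H1 : - C * ta + e * om = K * r ^ 3 * ta ^ 2 / 2).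
  { apply (Rmult_eq_reg_l (2 / r)); [| apply Rgt_not_eq, Rdiv_lt_0_compat; lra].
    replace (2 / r * (- C * ta + e * om)) with (2 * ((- C * ta + e * om) / r)) by (field; lra).
    replace (2 / r * (K * r ^ 3 * ta ^ 2 / 2)) with (K * (r * ta) ^ 2) by (field; lra). lra. }
  assert (Hom : om = kk * ta ^ 2 + ll * ta).
  { unfold kk, ll. destruct He as [-> | ->]; lra. }
  assert (Ht : tau = ta + t0) by reflexivity.
  rewrite Ht. unfold O1, O2, c0, t0. split.
  - replace Z1 with (A1 + d1) by (unfold d1; ring). rewrite Rd1, Hom. field. auto.
  - replace Z2 with (A2 + d2) by (unfold d2; ring). rewrite Rd2, Hom. field. auto.
Qed.

Lemma unit_u tx ty e C r : tx ^ 2 + ty ^ 2 = 1 -> (e = 1 \/ e = -1) -> 0 < r -> r * r = 1 + C ^ 2 ->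
  ((tx + C * e * ty) / r) ^ 2 + ((ty - C * e * tx) / r) ^ 2 = 1.
Proof. intros N He Hr Hr2.
  transitivity ((1 + C ^ 2 * (e * e)) * (tx ^ 2 + ty ^ 2) / (r * r)). field. lra.
  rewrite N. replace (e * e) with 1 by (destruct He as [-> | ->]; ring). rewrite Hr2. field. nra. Qed.


Lemma in_I_between a b s1 s2 c : in_I a b s1 -> in_I a b s2 -> s1 <= c <= s2 -> in_I a b c.
Proof. intros [A1 B1] [A2 B2] H. split.
  - destruct a; simpl in *; auto; lra.
  - destruct b; simpl in *; auto; lra. Qed.

Lemma exists_in_I a b : Rbar_lt a b -> exists s, in_I a b s.
Proof. intro H. destruct a as [a| |], b as [b| |]; simpl in H; try contradiction.
  - exists ((a + b) / 2). split; simpl; lra.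
  - exists (a + 1). split; simpl; auto; lra.
  - exists (b - 1). split; simpl; auto; lra.
  - exists 0. split; simpl; auto. Qed.

Lemma global_const a b x y lambda : strictly_convex a b x y -> arclength_on a b x y ->
  (forall s, in_I a b s -> HypU a b x y lambda s) ->
  forall s1 s2, in_I a b s1 -> in_I a b s2 -> forall Z, Psi x y s1 Z = Psi x y s2 Z.
Proof.
  intros Hsc Harc HU.
  assert (W : forall s1 s2, s1 <= s2 -> in_I a b s1 -> in_I a b s2 -> forall Z, Psi x y s1 Z = Psi x y s2 Z).
  { intros s1 s2 Hle H1 H2 Z.
    assert (Dz : forall c, s1 <= c <= s2 -> is_derive (fun s => Psi x y s Z) c 0).
    { intros c Hc. destruct (local_const a b x y lambda Hsc Harc HU c (in_I_between a b s1 s2 c H1 H2 Hc)) as [d [Hd L]].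
      assert (H0 : is_derive (fun _ : R => Psi x y c Z) c 0) by (auto_derive; auto).
      apply (is_derive_ext_loc (fun _ : R => Psi x y c Z)); [| exact H0].
      exists (mkposreal d Hd). intros t Ht. symmetry. apply L.
      unfold ball in Ht; simpl in Ht; unfold AbsRing_ball, abs, minus, plus, opp in Ht; simpl in Ht. exact Ht. }
    destruct (MVT_gen (fun s => Psi x y s Z) s1 s2 (fun _ => 0)) as [c [Hc E]].
    - intros c Hc. apply Dz. unfold Rmin, Rmax in Hc. destruct Rle_dec; lra.
    - intros c Hc. apply (is_derive_contpt _ c 0). apply Dz. unfold Rmin, Rmax in Hc. destruct Rle_dec; lra.
    - lra. }
  intros s1 s2 H1 H2 Z. destruct (Rle_or_lt s1 s2).
  - apply W; auto.
  - symmetry. apply W; auto. lra.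
Qed.


Theorem theorem2 (a b : Rbar) (x y : R -> R) (lambda : R -> R) :
  Rbar_lt a b ->
  strictly_convex a b x y ->
  arclength_on a b x y ->
  (forall s, in_I a b s ->
     exists delta : R, 0 < delta /\
       forall h1 h2 : R,
         Rabs h1 < delta -> Rabs h2 < delta ->
         in_I a b (s + h1) -> in_I a b (s + h2) ->
         curve x y s <> curve x y (s + h1) ->
         curve x y s <> curve x y (s + h2) ->
         curve x y (s + h1) <> curve x y (s + h2) ->
         cross (tangent x y s) (tangent x y (s + h1)) <> 0 ->
         cross (tangent x y s) (tangent x y (s + h2)) <> 0 ->
         cross (tangent x y (s + h1)) (tangent x y (s + h2)) <> 0 ->
         U_area x y s h1 h2 = lambda s * T_area x y s h1 h2) ->
  (forall s, in_I a b s -> lambda s = 1 / 2) /\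
  exists P : pt -> Prop, is_parabola P /\
    forall s, in_I a b s -> P (curve x y s).
Proof.
  intros Hab Hsc Harc HU0.
  assert (HU : forall s, in_I a b s -> HypU a b x y lambda s) by exact HU0.
  split. { intros s Hs. exact (step2 a b x y lambda s Hsc Hs (HU s Hs)). }
  destruct (exists_in_I a b Hab) as [s0 Hs0].
  assert (Hden : forall s, in_I a b s -> 0 < Rabs (curvature x y s) * (1 + Cs x y s ^ 2)).
  { intros s Hs. apply Rmult_lt_0_compat. apply Rabs_pos_lt. apply (sc_kappa a b x y s Hsc Hs).
    pose proof (pow2_ge_0 (Cs x y s)); lra. }
  assert (Z0 : forall s, in_I a b s -> Phi x y s0 (curve x y s) = 0).
  { intros s Hs. destruct (step4 a b x y lambda s Hsc Harc Hs (HU s Hs)) as [d [Hd D]].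
    destruct (D 0) as [_ P0]. rewrite Rabs_R0; lra. rewrite Rplus_0_r in P0.
    pose proof (global_const a b x y lambda Hsc Harc HU s0 s Hs0 Hs (curve x y s)) as G.
    unfold Psi in G. rewrite P0 in G. unfold Rdiv in G. rewrite Rmult_0_l in G.
    pose proof (Hden s0 Hs0) as H0.
    apply Rmult_integral in G. destruct G as [G|G]; auto.
    exfalso. apply (Rinv_neq_0_compat _ (Rgt_not_eq _ _ H0)). exact G. }
  pose proof (Harc s0 Hs0) as N.
  pose proof (sg_cases (curvature x y s0)) as He.
  pose proof (sc_kappa a b x y s0 Hsc Hs0) as Hk.
  assert (HK : 0 < Rabs (curvature x y s0)) by (apply Rabs_pos_lt; auto).
  set (tx := Derive x s0) in *. set (ty := Derive y s0) in *.
  set (e := sg (curvature x y s0)) in *. set (K := Rabs (curvature x y s0)) in *.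
  set (C := Cs x y s0) in *.
  set (r := sqrt (1 + C ^ 2)).
  assert (Hr : 0 < r) by (apply sqrt_lt_R0; pose proof (pow2_ge_0 C); lra).
  assert (Hr2 : r * r = 1 + C ^ 2) by (apply sqrt_sqrt; pose proof (pow2_ge_0 C); lra).
  set (u1 := (tx + C * e * ty) / r). set (u2 := (ty - C * e * tx) / r).
  set (v1 := - u2). set (v2 := u1).
  set (kk := e * K * r ^ 3 / 2). set (ll := e * C). set (t0 := ll / (2 * kk)). set (c0 := ll ^ 2 / (4 * kk)).
  set (O1 := x s0 - t0 * u1 - c0 * v1). set (O2 := y s0 - t0 * u2 - c0 * v2).
  assert (Hu : u1 ^ 2 + u2 ^ 2 = 1) by (apply unit_u; auto).
  assert (Hkk : kk <> 0).
  { unfold kk. assert (0 < K * r ^ 3) by (apply Rmult_lt_0_compat; auto; apply pow_lt; auto).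
    destruct He as [E | E]; rewrite E; lra. }
  exists (fun p => exists t : R, p = vadd (O1, O2) (vadd (vscal t (u1, u2)) (vscal (kk * t ^ 2) (v1, v2)))).
  split.
  - exists (O1, O2), (u1, u2), (v1, v2), kk. simpl. repeat split; auto.
    all: try (transitivity (u1 ^ 2 + u2 ^ 2); [unfold v1, v2; ring | exact Hu]).
    unfold v1, v2. ring.
  - intros s Hs. pose proof (Z0 s Hs) as Z. rewrite Phi_G in Z. fold tx ty e K C in Z.
    destruct (parab_point tx ty e K C r (x s0) (y s0) (fst (curve x y s)) (snd (curve x y s)) N He HK Hr Hr2 Z)
      as [E1 E2].
    exists (u1 * (x s - x s0) + u2 * (y s - y s0) + t0). unfold curve, vadd, vscal. simpl. simpl in E1, E2.
    unfold O1, O2, c0, t0, ll, kk, v1, v2, u1, u2.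
    assert (Hr3 : e * K * r ^ 3 <> 0) by (intro Z3; apply Hkk; unfold kk; rewrite Z3; field).
    f_equal; [etransitivity; [exact E1| field] | etransitivity; [exact E2| field]]; simpl in Hr3; repeat split; auto; lra.
Qed.
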